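(* Let $\beta\in\mathbb{C}$ and $N\geq2$ with $\beta^N=1$ and $\beta^k\neq1$ for $k=1,\dots,N-1$. Let $m\in\mathrm{Hol}(\mathbb{D})$, $m\not\equiv0$, and $T:\mathrm{Hol}(\mathbb{D})\to\mathrm{Hol}(\mathbb{D})$ given by $(Tf)(z)=m(z)f(\beta z)$. If $m(z_0)=0$ for some $z_0\in\mathbb{D}$, then $\sigma_p(T)=\emptyset$.
   Context: $\mathbb{D}$ is the open unit disc, $\mathrm{Hol}(\mathbb{D})$ the space of holomorphic functions on $\mathbb{D}$. $\sigma_p(T)$ is the set of $\lambda\in\mathbb{C}$ such that $\lambda\mathrm{Id}-T$ is not injective. *)

(* Defs.v *)
From Stdlib Require Import Reals.
From Coquelicot Require Import Coquelicot.
Open Scope C_scope.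

Definition in_disc (z : C) : Prop := (Cmod z < 1)%R.

(* Elements of Hol(D) are represented by functions C -> C; values outside
   D are irrelevant (two functions are equal in Hol(D) iff they agree on D). *)
Definition holomorphic_on_disc (f : C -> C) : Prop :=
  forall z : C, in_disc z -> @ex_derive C_AbsRing C_NormedModule f z.

Definition zero_on_disc (f : C -> C) : Prop :=
  forall z : C, in_disc z -> f z = 0.

Definition Top (m : C -> C) (beta : C) (f : C -> C) : C -> C :=
  fun z => m z * f (beta * z).

Definition in_point_spectrum (m : C -> C) (beta : C) (lambda : C) : Prop :=
  exists f : C -> C,
    holomorphic_on_disc f /\ ~ zero_on_disc f /\
    zero_on_disc (fun z => lambda * f z - Top m beta f z).

(* Main.v *)
Require Import Defs.
From Stdlib Require Import Reals.
From Coquelicot Require Import Coquelicot.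
Open Scope C_scope.
From Stdlib Require Import Lra Psatz Classical.

Lemma Cmod_pair_le (x y : R) : (Cmod (x, y) <= Rabs x + Rabs y)%R.
Proof.
  replace (x, y) with ((x, 0%R) + (0%R, y))%C.
  2:{ apply injective_projections; simpl; ring. }
  eapply Rle_trans; [apply Cmod_triangle|].
  unfold Cmod; simpl.
  apply Rplus_le_compat; right.
  - replace (x * (x * 1) + 0 * (0 * 1))%R with (x * x)%R by ring. apply sqrt_Rsqr_abs.
  - replace (0 * (0 * 1) + y * (y * 1))%R with (y * y)%R by ring. apply sqrt_Rsqr_abs.
Qed.

Lemma Cmod_Re_le z : (Rabs (Re z) <= Cmod z)%R.
Proof. apply re_le_Cmod. Qed.
Lemma Cmod_Im_le z : (Rabs (Im z) <= Cmod z)%R.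
Proof.
  destruct z as [x y]. unfold Cmod. simpl. rewrite <- sqrt_Rsqr_abs. apply sqrt_le_1_alt.
  unfold Rsqr. nra.
Qed.

Lemma Cmod_le_sum z : (Cmod z <= Rabs (Re z) + Rabs (Im z))%R.
Proof. destruct z as [x y]. apply Cmod_pair_le. Qed.

Goal forall a b c : C, a * (b + c) = a * b + a * c. intros; ring. Qed.
Goal forall a b : C, b <> 0 -> a / b * b = a. intros; field; auto. Qed.

Definition hol_at (g : C -> C) (z l : C) : Prop :=
  forall eps, (0 < eps)%R -> exists d, (0 < d)%R /\ forall w, (Cmod (w - z) < d)%R ->
    (Cmod (g w - g z - l * (w - z)) <= eps * Cmod (w - z))%R.

Definition hol (g : C -> C) (z : C) : Prop := exists l, hol_at g z l.

Lemma is_derive_hol_at g z l : is_derive (K:=C_AbsRing) (V:=C_NormedModule) g z l -> hol_at g z l.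
Proof.
  intros [_ H] eps Heps.
  specialize (H z (fun P HP => HP) (mkposreal eps Heps)).
  destruct H as [d Hd].
  exists (pos d). split. apply cond_pos.
  intros w Hw.
  assert (Hb : ball (M:=AbsRing_UniformSpace C_AbsRing) z d w) by exact Hw.
  specialize (Hd w Hb). simpl in Hd.
  replace (g w - g z - l * (w - z)) with (minus (minus (g w) (g z)) (scal (minus w z) l)).
  2:{ unfold minus, plus, opp, scal; simpl. unfold mult; simpl. ring. }
  exact Hd.
Qed.

Lemma hol_at_is_derive g z l : hol_at g z l -> is_derive (K:=C_AbsRing) (V:=C_NormedModule) g z l.
Proof.
  intros H. split.
  { apply is_linear_scal_l. }
  intros x Hx. apply (is_filter_lim_locally_unique (K:=C_AbsRing) (V:=AbsRing_NormedModule C_AbsRing)) in Hx. subst x.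
  intros eps. destruct (H eps (cond_pos eps)) as [d [Hd Hw]].
  exists (mkposreal d Hd).
  intros w Hb. change (Cmod (w - z) < d)%R in Hb.
  specialize (Hw w Hb).
  change (Cmod (minus (minus (g w) (g z)) (scal (minus w z) l)) <= eps * Cmod (minus w z))%R.
  replace (minus (minus (g w) (g z)) (scal (minus w z) l)) with (g w - g z - l * (w - z)).
  2:{ unfold minus, plus, opp, scal; simpl. unfold mult; simpl. ring. }
  exact Hw.
Qed.

Lemma is_derive_hol_at2 g z l : is_derive (K:=C_AbsRing) (V:=AbsRing_NormedModule C_AbsRing) g z l -> hol_at g z l.
Proof.
  intros [_ H] eps Heps.
  specialize (H z (fun P HP => HP) (mkposreal eps Heps)).
  destruct H as [d Hd].
  exists (pos d). split. apply cond_pos.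
  intros w Hw.
  assert (Hb : ball (M:=AbsRing_UniformSpace C_AbsRing) z d w) by exact Hw.
  specialize (Hd w Hb). simpl in Hd.
  replace (g w - g z - l * (w - z)) with (minus (minus (g w) (g z)) (scal (minus w z) l)).
  2:{ unfold minus, plus, opp, scal; simpl. unfold mult; simpl. ring. }
  exact Hd.
Qed.

Lemma hol_at_is_derive2 g z l : hol_at g z l -> is_derive (K:=C_AbsRing) (V:=AbsRing_NormedModule C_AbsRing) g z l.
Proof.
  intros H. split.
  { apply is_linear_scal_l. }
  intros x Hx. apply (is_filter_lim_locally_unique (K:=C_AbsRing) (V:=AbsRing_NormedModule C_AbsRing)) in Hx. subst x.
  intros eps. destruct (H eps (cond_pos eps)) as [d [Hd Hw]].
  exists (mkposreal d Hd).
  intros w Hb. change (Cmod (w - z) < d)%R in Hb.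
  specialize (Hw w Hb).
  change (Cmod (minus (minus (g w) (g z)) (scal (minus w z) l)) <= eps * Cmod (minus w z))%R.
  replace (minus (minus (g w) (g z)) (scal (minus w z) l)) with (g w - g z - l * (w - z)).
  2:{ unfold minus, plus, opp, scal; simpl. unfold mult; simpl. ring. }
  exact Hw.
Qed.

Lemma ex_derive_hol g z : ex_derive (K:=C_AbsRing) (V:=C_NormedModule) g z -> hol g z.
Proof. intros [l Hl]. exists l. now apply is_derive_hol_at. Qed.

Lemma hol_iff g z : hol g z <-> ex_derive (K:=C_AbsRing) (V:=C_NormedModule) g z.
Proof.
  split.
  - intros [l Hl]. exists l. now apply hol_at_is_derive.
  - apply ex_derive_hol.
Qed.

Lemma hol_plus f g z : hol f z -> hol g z -> hol (fun w => f w + g w) z.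
Proof.
  rewrite !hol_iff. intros [a Ha] [b Hb]. exists (plus a b).
  apply (is_derive_plus (K:=C_AbsRing) (V:=C_NormedModule) f g z a b Ha Hb).
Qed.

Lemma hol_minus f g z : hol f z -> hol g z -> hol (fun w => f w - g w) z.
Proof.
  rewrite !hol_iff. intros [a Ha] [b Hb]. exists (minus a b).
  apply (is_derive_minus (K:=C_AbsRing) (V:=C_NormedModule) f g z a b Ha Hb).
Qed.

Lemma hol_mult f g z : hol f z -> hol g z -> hol (fun w => f w * g w) z.
Proof.
  intros [a Ha] [b Hb]. apply hol_at_is_derive2 in Ha. apply hol_at_is_derive2 in Hb.
  eexists. apply is_derive_hol_at2.
  apply (is_derive_mult (K:=C_AbsRing) f g z a b Ha Hb).
  intros; apply Cmult_comm.
Qed.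

Lemma hol_const c z : hol (fun _ => c) z.
Proof.
  exists 0. intros eps Heps. exists 1%R. split; [lra|]. intros w _. cbv beta.
  replace (c - c - 0 * (w - z)) with (RtoC 0) by ring. rewrite Cmod_0.
  pose proof (Cmod_ge_0 (w - z)). nra.
Qed.

Lemma hol_id z : hol (fun w => w) z.
Proof.
  exists 1. intros eps Heps. exists 1%R. split; [lra|]. intros w _. cbv beta.
  replace (w - z - 1 * (w - z)) with (RtoC 0) by ring. rewrite Cmod_0.
  pose proof (Cmod_ge_0 (w - z)). nra.
Qed.

Lemma hol_ext_loc f g z r : (0 < r)%R -> (forall w, (Cmod (w - z) < r)%R -> f w = g w) ->
  hol f z -> hol g z.
Proof.
  intros Hr Heq [l Hl]. exists l. intros eps Heps.
  destruct (Hl eps Heps) as [d [Hd H]].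
  exists (Rmin d r). split. { apply Rmin_pos; lra. }
  intros w Hw.
  rewrite <- (Heq w), <- (Heq z).
  - apply H. eapply Rlt_le_trans; [apply Hw| apply Rmin_l].
  - unfold Cminus. rewrite Cplus_opp_r, Cmod_0. lra.
  - eapply Rlt_le_trans; [apply Hw| apply Rmin_r].
Qed.

Definition ccont (g : C -> C) (z : C) : Prop :=
  forall eps, (0 < eps)%R -> exists d, (0 < d)%R /\ forall w, (Cmod (w - z) < d)%R ->
    (Cmod (g w - g z) < eps)%R.

Lemma hol_ccont g z : hol g z -> ccont g z.
Proof.
  intros [l Hl] eps Heps.
  destruct (Hl 1%R ltac:(lra)) as [d [Hd H]].
  exists (Rmin d (eps / (Cmod l + 2))). split.
  { apply Rmin_pos; [lra|]. apply Rdiv_lt_0_compat; [lra|]. pose proof (Cmod_ge_0 l); lra. }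
  intros w Hw.
  assert (H1 : (Cmod (w - z) < d)%R) by (eapply Rlt_le_trans; [apply Hw| apply Rmin_l]).
  assert (H2 : (Cmod (w - z) < eps / (Cmod l + 2))%R) by (eapply Rlt_le_trans; [apply Hw| apply Rmin_r]).
  specialize (H w H1).
  replace (g w - g z) with ((g w - g z - l * (w - z)) + l * (w - z)) by ring.
  eapply Rle_lt_trans; [apply Cmod_triangle|].
  rewrite Cmod_mult.
  pose proof (Cmod_ge_0 l). pose proof (Cmod_ge_0 (w - z)).
  assert (Cmod (w - z) * (Cmod l + 2) < eps)%R.
  { apply (Rmult_lt_compat_r (Cmod l + 2)) in H2; [|lra].
    unfold Rdiv in H2. rewrite Rmult_assoc, Rinv_l in H2; lra. }
  nra.
Qed.

Lemma Cmod_sub_sym a b : Cmod (a - b) = Cmod (b - a).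
Proof.
  replace (a - b) with (- (b - a)) by ring. apply Cmod_opp.
Qed.

Lemma Cmod_rev_tri a b : (Cmod a - Cmod b <= Cmod (a - b))%R.
Proof.
  pose proof (Cmod_triangle (a - b) b). replace (a - b + b) with a in H by ring. lra.
Qed.

Lemma hol_inv_lin c z : z <> c -> hol (fun w => / (w - c)) z.
Proof.
  intros Hzc.
  set (r := Cmod (z - c)).
  assert (Hr : (0 < r)%R).
  { unfold r. apply Cmod_gt_0. intro H. apply Hzc. 
    replace z with ((z - c) + c) by ring. rewrite H. ring. }
  exists (- / ((z - c) * (z - c))).
  intros eps Heps.
  exists (Rmin (r / 2) (eps * r * r * r / 2)). split.
  { apply Rmin_pos; [lra|]. apply Rdiv_lt_0_compat; [|lra]. repeat apply Rmult_lt_0_compat; lra. }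
  intros w Hw.
  assert (H1 : (Cmod (w - z) < r / 2)%R) by (eapply Rlt_le_trans; [apply Hw| apply Rmin_l]).
  assert (H2 : (Cmod (w - z) < eps * r * r * r / 2)%R) by (eapply Rlt_le_trans; [apply Hw| apply Rmin_r]).
  assert (Hwc : (r / 2 <= Cmod (w - c))%R).
  { pose proof (Cmod_rev_tri (z - c) (z - w)). replace (z - c - (z - w)) with (w - c) in H by ring.
    rewrite (Cmod_sub_sym z w) in H. fold r in H. lra. }
  assert (Hwc0 : w - c <> 0).
  { intro H. rewrite H, Cmod_0 in Hwc. lra. }
  assert (Hzc0 : z - c <> 0).
  { intro H. unfold r in Hr. rewrite H, Cmod_0 in Hr. lra. }
  replace (/ (w - c) - / (z - c) - - / ((z - c) * (z - c)) * (w - z))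
    with ((w - z) * (w - z) / ((w - c) * ((z - c) * (z - c)))).
  2:{ field. split; auto. }
  unfold Cdiv. rewrite !Cmod_mult, Cmod_inv.
  2:{ repeat apply Cmult_neq_0; auto. }
  rewrite !Cmod_mult. fold r.
  pose proof (Cmod_ge_0 (w - z)) as Hn.
  set (n := Cmod (w - z)) in *. set (q := Cmod (w - c)) in *.
  apply (Rle_trans _ (n * n * / (r / 2 * (r * r)))).
  { apply Rmult_le_compat_l; [nra|]. apply Rinv_le_contravar.
    - apply Rmult_lt_0_compat; nra.
    - apply Rmult_le_compat_r; nra. }
  replace (n * n * / (r / 2 * (r * r)))%R with (n * (2 * n / (r * r * r)))%R by (field; lra).
  rewrite (Rmult_comm eps). apply Rmult_le_compat_l; [lra|].
  apply (Rmult_le_reg_r (r * r * r)). { repeat apply Rmult_lt_0_compat; lra. }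
  unfold Rdiv. rewrite Rmult_assoc, Rinv_l. 2:{ apply Rgt_not_eq. repeat apply Rmult_lt_0_compat; lra. }
  nra.
Qed.

Definition CI (h : R -> C) (a b : R) : C := @RInt C_R_CompleteNormedModule h a b.
Definition CexI (h : R -> C) (a b : R) : Prop := @ex_RInt C_R_NormedModule h a b.
Definition CisI (h : R -> C) (a b : R) (l : C) : Prop := @is_RInt C_R_NormedModule h a b l.

Lemma norm_CR (z : C) : @norm R_AbsRing C_R_NormedModule z = Cmod z.
Proof.
  destruct z as [x y]. unfold norm; simpl. unfold prod_norm, Cmod; simpl.
  f_equal. unfold norm; simpl. unfold abs; simpl.
  rewrite !Rmult_1_r. rewrite <- !Rsqr_def. rewrite <- !Rsqr_abs. reflexivity.
Qed.

Lemma CI_correct h a b : CexI h a b -> CisI h a b (CI h a b).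
Proof. intros H. apply (RInt_correct (V:=C_R_CompleteNormedModule)). exact H. Qed.

Lemma CI_unique h a b l : CisI h a b l -> CI h a b = l.
Proof. intros H. apply (is_RInt_unique (V:=C_R_CompleteNormedModule)). exact H. Qed.

Lemma CI_bound h a b M : (a <= b)%R -> CexI h a b -> (forall t, (a <= t <= b)%R -> (Cmod (h t) <= M)%R) ->
  (Cmod (CI h a b) <= (b - a) * M)%R.
Proof.
  intros Hab Hex HM. rewrite <- norm_CR.
  apply (norm_RInt_le_const (V:=C_R_NormedModule) h a b); auto.
  - intros t Ht. rewrite norm_CR. auto.
  - apply CI_correct; auto.
Qed.

Lemma CisI_plus f g a b lf lg : CisI f a b lf -> CisI g a b lg -> CisI (fun t => f t + g t) a b (lf + lg).
Proof. intros Hf Hg. apply (is_RInt_plus (V:=C_R_NormedModule) f g a b lf lg Hf Hg). Qed.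

Lemma CisI_minus f g a b lf lg : CisI f a b lf -> CisI g a b lg -> CisI (fun t => f t - g t) a b (lf - lg).
Proof. intros Hf Hg. apply (is_RInt_minus (V:=C_R_NormedModule) f g a b lf lg Hf Hg). Qed.

Lemma CisI_pair f a b lr li : is_RInt (fun t => Re (f t)) a b lr -> is_RInt (fun t => Im (f t)) a b li ->
  CisI f a b (lr, li).
Proof.
  intros H1 H2. apply (is_RInt_fct_extend_pair (U:=R_NormedModule) (V:=R_NormedModule) f a b lr li H1 H2).
Qed.

Lemma CisI_Re f a b l : CisI f a b l -> is_RInt (fun t => Re (f t)) a b (Re l).
Proof. intros H. apply (is_RInt_fct_extend_fst (U:=R_NormedModule) (V:=R_NormedModule) f a b l H). Qed.

Lemma CisI_Im f a b l : CisI f a b l -> is_RInt (fun t => Im (f t)) a b (Im l).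
Proof. intros H. apply (is_RInt_fct_extend_snd (U:=R_NormedModule) (V:=R_NormedModule) f a b l H). Qed.

Lemma R_minus_eq (a b : R) : minus a b = (a - b)%R. Proof. reflexivity. Qed.
Lemma R_plus_eq (a b : R) : plus a b = (a + b)%R. Proof. reflexivity. Qed.
Lemma R_scal_eq (a b : R) : scal (V:=R_NormedModule) a b = (a * b)%R. Proof. reflexivity. Qed.

Ltac rsimpl := repeat match goal with
  | |- context [@scal _ _ ?a ?b] => change (@scal _ _ a b) with (Rmult a b)
  | |- context [@minus _ ?a ?b] => change (@minus _ a b) with (Rminus a b)
  | |- context [@plus _ ?a ?b] => change (@plus _ a b) with (Rplus a b)
  end.

Lemma CisI_scal c f a b l : CisI f a b l -> CisI (fun t => c * f t) a b (c * l).
Proof.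
  intros H. pose proof (CisI_Re _ _ _ _ H) as Hr. pose proof (CisI_Im _ _ _ _ H) as Hi.
  destruct c as [cr ci]. destruct l as [lr li].
  apply CisI_pair.
  - apply (is_RInt_ext (fun t => minus (scal cr (Re (f t))) (scal ci (Im (f t))))).
    { intros t _. rsimpl. destruct (f t) as [u v]. unfold Cmult, Re, Im; simpl. ring. }
    replace (Re ((cr, ci) * (lr, li))) with (minus (scal cr lr) (scal ci li)).
    2:{ rsimpl. unfold Cmult, Re, Im; simpl. ring. }
    apply (is_RInt_minus (V:=R_NormedModule)); apply (is_RInt_scal (V:=R_NormedModule)); assumption.
  - apply (is_RInt_ext (fun t => plus (scal cr (Im (f t))) (scal ci (Re (f t))))).
    { intros t _. rsimpl. destruct (f t) as [u v]. unfold Cmult, Re, Im; simpl. ring. }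
    replace (Im ((cr, ci) * (lr, li))) with (plus (scal cr li) (scal ci lr)).
    2:{ rsimpl. unfold Cmult, Re, Im; simpl. ring. }
    apply (is_RInt_plus (V:=R_NormedModule)); apply (is_RInt_scal (V:=R_NormedModule)); assumption.
Qed.

Lemma CisI_ext f g a b l : (forall t, f t = g t) -> CisI f a b l -> CisI g a b l.
Proof. intros E H. apply (is_RInt_ext (V:=C_R_NormedModule) f g a b l); auto. Qed.

Lemma CI_ext f g a b : (forall t, f t = g t) -> CI f a b = CI g a b.
Proof. intros E. apply (RInt_ext (V:=C_R_CompleteNormedModule)). auto. Qed.

Lemma CI_plus f g a b : CexI f a b -> CexI g a b -> CI (fun t => f t + g t) a b = CI f a b + CI g a b.
Proof. intros Hf Hg. apply CI_unique. apply CisI_plus; apply CI_correct; auto. Qed.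

Lemma CI_minus f g a b : CexI f a b -> CexI g a b -> CI (fun t => f t - g t) a b = CI f a b - CI g a b.
Proof. intros Hf Hg. apply CI_unique. apply CisI_minus; apply CI_correct; auto. Qed.

Lemma CI_scal c f a b : CexI f a b -> CI (fun t => c * f t) a b = c * CI f a b.
Proof. intros Hf. apply CI_unique. apply CisI_scal; apply CI_correct; auto. Qed.

Lemma CexI_plus f g a b : CexI f a b -> CexI g a b -> CexI (fun t => f t + g t) a b.
Proof. intros Hf Hg. eexists. apply CisI_plus; apply CI_correct; eauto. Qed.
Lemma CexI_minus f g a b : CexI f a b -> CexI g a b -> CexI (fun t => f t - g t) a b.
Proof. intros Hf Hg. eexists. apply CisI_minus; apply CI_correct; eauto. Qed.
Lemma CexI_scal c f a b : CexI f a b -> CexI (fun t => c * f t) a b.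
Proof. intros Hf. eexists. apply CisI_scal; apply CI_correct; eauto. Qed.

Lemma CI_Chasles h a b c : CexI h a b -> CexI h b c -> CI h a b + CI h b c = CI h a c.
Proof. intros H1 H2. apply (RInt_Chasles (V:=C_R_CompleteNormedModule) h a b c H1 H2). Qed.

Lemma CexI_Chasles1 h a b c : (a <= b <= c)%R -> CexI h a c -> CexI h a b.
Proof. intros H1 H2. apply (ex_RInt_Chasles_1 (V:=C_R_CompleteNormedModule) h a b c H1 H2). Qed.
Lemma CexI_Chasles2 h a b c : (a <= b <= c)%R -> CexI h a c -> CexI h b c.
Proof. intros H1 H2. apply (ex_RInt_Chasles_2 (V:=C_R_CompleteNormedModule) h a b c H1 H2). Qed.

Lemma Im_CI h a b : CexI h a b -> Im (CI h a b) = RInt (fun t => Im (h t)) a b.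
Proof.
  intros H. symmetry. apply is_RInt_unique. apply CisI_Im. apply CI_correct. auto.
Qed.
Lemma Re_CI h a b : CexI h a b -> Re (CI h a b) = RInt (fun t => Re (h t)) a b.
Proof.
  intros H. symmetry. apply is_RInt_unique. apply CisI_Re. apply CI_correct. auto.
Qed.

Definition rcont (h : R -> C) (t : R) : Prop :=
  forall eps, (0 < eps)%R -> exists d, (0 < d)%R /\ forall s, (Rabs (s - t) < d)%R -> (Cmod (h s - h t) < eps)%R.

Lemma rcont_continuous h t : rcont h t -> @continuous R_UniformSpace C_R_NormedModule h t.
Proof.
  intros H. apply (filterlim_locally (U:=C_R_NormedModule)). intros eps.
  destruct (H eps (cond_pos eps)) as [d [Hd Hs]].
  exists (mkposreal d Hd). intros s Hb. 
  apply (C_NormedModule_mixin_compat1). apply Hs. exact Hb.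
Qed.

Lemma CexI_cont h a b : (a <= b)%R -> (forall t, (a <= t <= b)%R -> rcont h t) -> CexI h a b.
Proof.
  intros Hab H. apply (ex_RInt_continuous (V:=C_R_CompleteNormedModule)).
  intros z Hz. rewrite Rmin_left, Rmax_right in Hz by lra.
  apply rcont_continuous. auto.
Qed.

Lemma is_RInt_constR (a b v : R) : is_RInt (fun _ => v) a b ((b - a) * v)%R.
Proof. exact (is_RInt_const (V:=R_NormedModule) a b v). Qed.

Lemma CisI_const c a b : CisI (fun _ => c) a b ((b - a)%R * c).
Proof.
  replace ((b - a)%R * c) with (((b - a) * Re c)%R, ((b - a) * Im c)%R).
  2:{ destruct c. unfold Cmult, Re, Im, RtoC; simpl. apply injective_projections; simpl; ring. }
  apply CisI_pair; apply is_RInt_constR.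
Qed.

Lemma is_RInt_id a b : is_RInt (fun t => t) a b ((b * b - a * a) / 2)%R.
Proof.
  pose proof (is_RInt_derive (V:=R_CompleteNormedModule) (fun t => t * t / 2)%R (fun t => t) a b) as H.
  assert (E : ((b * b - a * a) / 2 = b * b / 2 - a * a / 2)%R) by field.
  rewrite E. refine (H _ _).
  - intros x _. auto_derive; auto. field.
  - intros x _. apply continuous_id.
Qed.

Lemma CisI_hline a b y : CisI (fun t => (t, y)) a b (((b * b - a * a) / 2)%R, ((b - a) * y)%R).
Proof.
  apply CisI_pair.
  - apply is_RInt_id.
  - apply is_RInt_constR.
Qed.

Lemma CisI_vline a b x : CisI (fun t => (x, t)) a b (((b - a) * x)%R, ((b * b - a * a) / 2)%R).
Proof.
  apply CisI_pair.
  - apply is_RInt_constR.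
  - apply is_RInt_id.
Qed.

Definition hI (g : C -> C) x1 x2 y := CI (fun t => g (t, y)) x1 x2.
Definition vI (g : C -> C) x y1 y2 := CI (fun t => g (x, t)) y1 y2.
Definition RI (g : C -> C) x1 x2 y1 y2 : C :=
  hI g x1 x2 y1 + Ci * vI g x2 y1 y2 - hI g x1 x2 y2 - Ci * vI g x1 y1 y2.

Definition cont_rect g x1 x2 y1 y2 :=
  forall x y, (x1 <= x <= x2)%R -> (y1 <= y <= y2)%R -> ccont g (x, y).

Definition on_bd x1 x2 y1 y2 (x y : R) : Prop :=
  (x1 <= x <= x2)%R /\ (y1 <= y <= y2)%R /\ (x = x1 \/ x = x2 \/ y = y1 \/ y = y2).

Definition cont_bd g x1 x2 y1 y2 :=
  forall x y, on_bd x1 x2 y1 y2 x y -> ccont g (x, y).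

Lemma cont_rect_bd g x1 x2 y1 y2 : cont_rect g x1 x2 y1 y2 -> cont_bd g x1 x2 y1 y2.
Proof. intros H x y (A & B & _). apply H; auto. Qed.

Lemma Cmod_hdiff s t y : Cmod ((s, y) - (t, y)) = Rabs (s - t).
Proof.
  replace ((s, y) - (t, y)) with (RtoC (s - t)).
  2:{ apply injective_projections; simpl; ring. }
  apply Cmod_R.
Qed.
Lemma Cmod_vdiff s t x : Cmod ((x, s) - (x, t)) = Rabs (s - t).
Proof.
  replace ((x, s) - (x, t)) with (Ci * RtoC (s - t)).
  2:{ apply injective_projections; simpl; ring. }
  rewrite Cmod_mult, Cmod_R. replace (Cmod Ci) with 1%R. ring.
  unfold Cmod, Ci; simpl. replace (0 * (0 * 1) + 1 * (1 * 1))%R with 1%R by ring. now rewrite sqrt_1.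
Qed.

Lemma hrcont g t y : ccont g (t, y) -> rcont (fun s => g (s, y)) t.
Proof.
  intros H eps Heps. destruct (H eps Heps) as [d [Hd Hw]]. exists d. split; auto.
  intros s Hs. apply Hw. rewrite Cmod_hdiff. auto.
Qed.
Lemma vrcont g x t : ccont g (x, t) -> rcont (fun s => g (x, s)) t.
Proof.
  intros H eps Heps. destruct (H eps Heps) as [d [Hd Hw]]. exists d. split; auto.
  intros s Hs. apply Hw. rewrite Cmod_vdiff. auto.
Qed.

Lemma hex g x1 x2 y : (x1 <= x2)%R -> (forall t, (x1 <= t <= x2)%R -> ccont g (t, y)) ->
  CexI (fun t => g (t, y)) x1 x2.
Proof. intros H1 H2. apply CexI_cont; auto. intros t Ht. apply hrcont. auto. Qed.
Lemma vex g x y1 y2 : (y1 <= y2)%R -> (forall t, (y1 <= t <= y2)%R -> ccont g (x, t)) ->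
  CexI (fun t => g (x, t)) y1 y2.
Proof. intros H1 H2. apply CexI_cont; auto. intros t Ht. apply vrcont. auto. Qed.

Lemma split_x g x1 xm x2 y1 y2 : (x1 <= xm <= x2)%R -> (y1 <= y2)%R -> cont_rect g x1 x2 y1 y2 ->
  RI g x1 x2 y1 y2 = RI g x1 xm y1 y2 + RI g xm x2 y1 y2.
Proof.
  intros Hx Hy Hc. unfold RI, hI.
  rewrite <- (CI_Chasles (fun t => g (t, y1)) x1 xm x2).
  2:{ apply hex; [lra|]. intros; apply Hc; lra. }
  2:{ apply hex; [lra|]. intros; apply Hc; lra. }
  rewrite <- (CI_Chasles (fun t => g (t, y2)) x1 xm x2).
  2:{ apply hex; [lra|]. intros; apply Hc; lra. }
  2:{ apply hex; [lra|]. intros; apply Hc; lra. }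
  ring.
Qed.

Lemma split_y g x1 x2 y1 ym y2 : (x1 <= x2)%R -> (y1 <= ym <= y2)%R -> cont_rect g x1 x2 y1 y2 ->
  RI g x1 x2 y1 y2 = RI g x1 x2 y1 ym + RI g x1 x2 ym y2.
Proof.
  intros Hx Hy Hc. unfold RI, vI.
  rewrite <- (CI_Chasles (fun t => g (x2, t)) y1 ym y2).
  2:{ apply vex; [lra|]. intros; apply Hc; lra. }
  2:{ apply vex; [lra|]. intros; apply Hc; lra. }
  rewrite <- (CI_Chasles (fun t => g (x1, t)) y1 ym y2).
  2:{ apply vex; [lra|]. intros; apply Hc; lra. }
  2:{ apply vex; [lra|]. intros; apply Hc; lra. }
  ring.
Qed.

Lemma hI_affine c0 c1 x1 x2 y :
  hI (fun z => c0 + c1 * z) x1 x2 y = (x2 - x1)%R * c0 + c1 * (((x2 * x2 - x1 * x1) / 2)%R, ((x2 - x1) * y)%R).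
Proof.
  unfold hI. apply CI_unique. apply CisI_plus. apply CisI_const. apply CisI_scal. apply CisI_hline.
Qed.
Lemma vI_affine c0 c1 x y1 y2 :
  vI (fun z => c0 + c1 * z) x y1 y2 = (y2 - y1)%R * c0 + c1 * (((y2 - y1) * x)%R, ((y2 * y2 - y1 * y1) / 2)%R).
Proof.
  unfold vI. apply CI_unique. apply CisI_plus. apply CisI_const. apply CisI_scal. apply CisI_vline.
Qed.

Lemma RI_affine c0 c1 x1 x2 y1 y2 : RI (fun z => c0 + c1 * z) x1 x2 y1 y2 = 0.
Proof.
  unfold RI. rewrite !hI_affine, !vI_affine.
  set (H1 := (((x2 * x2 - x1 * x1) / 2)%R, ((x2 - x1) * y1)%R)).
  set (H2 := (((x2 * x2 - x1 * x1) / 2)%R, ((x2 - x1) * y2)%R)).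
  set (V2 := (((y2 - y1) * x2)%R, ((y2 * y2 - y1 * y1) / 2)%R)).
  set (V1 := (((y2 - y1) * x1)%R, ((y2 * y2 - y1 * y1) / 2)%R)).
  assert (E : H1 - H2 + Ci * (V2 - V1) = 0).
  { unfold H1, H2, V1, V2. apply injective_projections; simpl; ring. }
  transitivity (c1 * (H1 - H2 + Ci * (V2 - V1))). ring.
  rewrite E. ring.
Qed.

Lemma Cmod_Ci : Cmod Ci = 1%R.
Proof.
  unfold Cmod, Ci; simpl. replace (0 * (0 * 1) + 1 * (1 * 1))%R with 1%R by ring. now rewrite sqrt_1.
Qed.

Lemma RI_bound g x1 x2 y1 y2 M : (x1 <= x2)%R -> (y1 <= y2)%R -> cont_bd g x1 x2 y1 y2 ->
  (forall x y, on_bd x1 x2 y1 y2 x y -> (Cmod (g (x, y)) <= M)%R) ->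
  (Cmod (RI g x1 x2 y1 y2) <= 2 * ((x2 - x1) + (y2 - y1)) * M)%R.
Proof.
  intros Hx Hy Hc HM. unfold RI, hI, vI.
  assert (A1 : (Cmod (CI (fun t => g (t, y1)) x1 x2) <= (x2 - x1) * M)%R).
  { apply CI_bound; auto. apply hex; auto. intros; apply Hc; unfold on_bd; repeat split; lra. intros; apply HM; unfold on_bd; repeat split; lra. }
  assert (A2 : (Cmod (CI (fun t => g (t, y2)) x1 x2) <= (x2 - x1) * M)%R).
  { apply CI_bound; auto. apply hex; auto. intros; apply Hc; unfold on_bd; repeat split; lra. intros; apply HM; unfold on_bd; repeat split; lra. }
  assert (A3 : (Cmod (CI (fun t => g (x1, t)) y1 y2) <= (y2 - y1) * M)%R).
  { apply CI_bound; auto. apply vex; auto. intros; apply Hc; unfold on_bd; repeat split; lra. intros; apply HM; unfold on_bd; repeat split; lra. }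
  assert (A4 : (Cmod (CI (fun t => g (x2, t)) y1 y2) <= (y2 - y1) * M)%R).
  { apply CI_bound; auto. apply vex; auto. intros; apply Hc; unfold on_bd; repeat split; lra. intros; apply HM; unfold on_bd; repeat split; lra. }
  set (a1 := CI (fun t => g (t, y1)) x1 x2) in *.
  set (a2 := CI (fun t => g (t, y2)) x1 x2) in *.
  set (a3 := CI (fun t => g (x1, t)) y1 y2) in *.
  set (a4 := CI (fun t => g (x2, t)) y1 y2) in *.
  unfold Cminus.
  eapply Rle_trans. apply Cmod_triangle. rewrite Cmod_opp, Cmod_mult, Cmod_Ci.
  eapply Rle_trans. apply Rplus_le_compat_r. apply Cmod_triangle. rewrite Cmod_opp.
  eapply Rle_trans. apply Rplus_le_compat_r. apply Rplus_le_compat_r. apply Cmod_triangle.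
  rewrite Cmod_mult, Cmod_Ci. lra.
Qed.

Lemma cont_rect_sub g x1 x2 y1 y2 x1' x2' y1' y2' : cont_rect g x1 x2 y1 y2 ->
  (x1 <= x1')%R -> (x2' <= x2)%R -> (y1 <= y1')%R -> (y2' <= y2)%R -> cont_rect g x1' x2' y1' y2'.
Proof. intros H a b c d x y Hx Hy. apply H; lra. Qed.

Lemma RI_minus g1 g2 x1 x2 y1 y2 : (x1 <= x2)%R -> (y1 <= y2)%R -> cont_bd g1 x1 x2 y1 y2 -> cont_bd g2 x1 x2 y1 y2 ->
  RI (fun z => g1 z - g2 z) x1 x2 y1 y2 = RI g1 x1 x2 y1 y2 - RI g2 x1 x2 y1 y2.
Proof.
  intros Hx Hy H1 H2. unfold RI, hI, vI.
  rewrite (CI_minus (fun t => g1 (t, y1)) (fun t => g2 (t, y1))) by (apply hex; auto; intros; first [apply H1 | apply H2]; unfold on_bd; repeat split; lra).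
  rewrite (CI_minus (fun t => g1 (t, y2)) (fun t => g2 (t, y2))) by (apply hex; auto; intros; first [apply H1 | apply H2]; unfold on_bd; repeat split; lra).
  rewrite (CI_minus (fun t => g1 (x1, t)) (fun t => g2 (x1, t))) by (apply vex; auto; intros; first [apply H1 | apply H2]; unfold on_bd; repeat split; lra).
  rewrite (CI_minus (fun t => g1 (x2, t)) (fun t => g2 (x2, t))) by (apply vex; auto; intros; first [apply H1 | apply H2]; unfold on_bd; repeat split; lra).
  ring.
Qed.

Lemma RI_scal c g1 x1 x2 y1 y2 : (x1 <= x2)%R -> (y1 <= y2)%R -> cont_bd g1 x1 x2 y1 y2 ->
  RI (fun z => c * g1 z) x1 x2 y1 y2 = c * RI g1 x1 x2 y1 y2.
Proof.
  intros Hx Hy H1. unfold RI, hI, vI.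
  rewrite (CI_scal c (fun t => g1 (t, y1))) by (apply hex; auto; intros; apply H1; unfold on_bd; repeat split; lra).
  rewrite (CI_scal c (fun t => g1 (t, y2))) by (apply hex; auto; intros; apply H1; unfold on_bd; repeat split; lra).
  rewrite (CI_scal c (fun t => g1 (x1, t))) by (apply vex; auto; intros; apply H1; unfold on_bd; repeat split; lra).
  rewrite (CI_scal c (fun t => g1 (x2, t))) by (apply vex; auto; intros; apply H1; unfold on_bd; repeat split; lra).
  ring.
Qed.

Lemma CI_ext_in f g a b : (a <= b)%R -> (forall t, (a <= t <= b)%R -> f t = g t) -> CI f a b = CI g a b.
Proof.
  intros Hab E. apply (RInt_ext (V:=C_R_CompleteNormedModule)).
  intros x Hx. rewrite Rmin_left, Rmax_right in Hx by lra. apply E; lra.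
Qed.

Lemma RI_ext g1 g2 x1 x2 y1 y2 : (x1 <= x2)%R -> (y1 <= y2)%R ->
  (forall x y, (x1 <= x <= x2)%R -> (y1 <= y <= y2)%R -> g1 (x, y) = g2 (x, y)) ->
  RI g1 x1 x2 y1 y2 = RI g2 x1 x2 y1 y2.
Proof.
  intros Hx Hy E. unfold RI, hI, vI.
  rewrite (CI_ext_in (fun t => g1 (t, y1)) (fun t => g2 (t, y1))) by (auto; intros; apply E; lra).
  rewrite (CI_ext_in (fun t => g1 (t, y2)) (fun t => g2 (t, y2))) by (auto; intros; apply E; lra).
  rewrite (CI_ext_in (fun t => g1 (x1, t)) (fun t => g2 (x1, t))) by (auto; intros; apply E; lra).
  rewrite (CI_ext_in (fun t => g1 (x2, t)) (fun t => g2 (x2, t))) by (auto; intros; apply E; lra).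
  reflexivity.
Qed.

Lemma RI_ext_bd g1 g2 x1 x2 y1 y2 : (x1 <= x2)%R -> (y1 <= y2)%R ->
  (forall x y, on_bd x1 x2 y1 y2 x y -> g1 (x, y) = g2 (x, y)) ->
  RI g1 x1 x2 y1 y2 = RI g2 x1 x2 y1 y2.
Proof.
  intros Hx Hy E. unfold RI, hI, vI.
  rewrite (CI_ext_in (fun t => g1 (t, y1)) (fun t => g2 (t, y1))) by (auto; intros; apply E; unfold on_bd; repeat split; lra).
  rewrite (CI_ext_in (fun t => g1 (t, y2)) (fun t => g2 (t, y2))) by (auto; intros; apply E; unfold on_bd; repeat split; lra).
  rewrite (CI_ext_in (fun t => g1 (x1, t)) (fun t => g2 (x1, t))) by (auto; intros; apply E; unfold on_bd; repeat split; lra).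
  rewrite (CI_ext_in (fun t => g1 (x2, t)) (fun t => g2 (x2, t))) by (auto; intros; apply E; unfold on_bd; repeat split; lra).
  reflexivity.
Qed.

Record rect := mkR { rx1 : R; rx2 : R; ry1 : R; ry2 : R }.

Definition RIr g r := RI g (rx1 r) (rx2 r) (ry1 r) (ry2 r).
Definition q1 r := mkR (rx1 r) ((rx1 r + rx2 r) / 2) (ry1 r) ((ry1 r + ry2 r) / 2).
Definition q2 r := mkR ((rx1 r + rx2 r) / 2) (rx2 r) (ry1 r) ((ry1 r + ry2 r) / 2).
Definition q3 r := mkR (rx1 r) ((rx1 r + rx2 r) / 2) ((ry1 r + ry2 r) / 2) (ry2 r).
Definition q4 r := mkR ((rx1 r + rx2 r) / 2) (rx2 r) ((ry1 r + ry2 r) / 2) (ry2 r).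

Definition wf r := (rx1 r <= rx2 r)%R /\ (ry1 r <= ry2 r)%R.
Definition contr g r := cont_rect g (rx1 r) (rx2 r) (ry1 r) (ry2 r).

Lemma quarter_sum g r : wf r -> contr g r -> RIr g r = RIr g (q1 r) + RIr g (q2 r) + RIr g (q3 r) + RIr g (q4 r).
Proof.
  intros [Hx Hy] Hc. unfold RIr, q1, q2, q3, q4; simpl. unfold contr in Hc.
  rewrite (split_x g (rx1 r) ((rx1 r + rx2 r) / 2) (rx2 r)) by (auto; lra).
  rewrite (split_y g (rx1 r) ((rx1 r + rx2 r) / 2) (ry1 r) ((ry1 r + ry2 r) / 2) (ry2 r)).
  2: lra. 2: lra. 2: apply (cont_rect_sub g (rx1 r) (rx2 r) (ry1 r) (ry2 r)); auto; lra.
  rewrite (split_y g ((rx1 r + rx2 r) / 2) (rx2 r) (ry1 r) ((ry1 r + ry2 r) / 2) (ry2 r)).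
  2: lra. 2: lra. 2: apply (cont_rect_sub g (rx1 r) (rx2 r) (ry1 r) (ry2 r)); auto; lra.
  ring.
Qed.

Definition next g r :=
  if Rle_dec (Cmod (RIr g r)) (4 * Cmod (RIr g (q1 r))) then q1 r else
  if Rle_dec (Cmod (RIr g r)) (4 * Cmod (RIr g (q2 r))) then q2 r else
  if Rle_dec (Cmod (RIr g r)) (4 * Cmod (RIr g (q3 r))) then q3 r else q4 r.

Definition is_quarter q r :=
  (rx1 r <= rx1 q)%R /\ (rx2 q <= rx2 r)%R /\ (ry1 r <= ry1 q)%R /\ (ry2 q <= ry2 r)%R /\
  (rx2 q - rx1 q = (rx2 r - rx1 r) / 2)%R /\ (ry2 q - ry1 q = (ry2 r - ry1 r) / 2)%R.

Lemma next_prop g r : wf r -> contr g r ->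
  is_quarter (next g r) r /\ (Cmod (RIr g r) <= 4 * Cmod (RIr g (next g r)))%R.
Proof.
  intros Hw Hc. pose proof (quarter_sum g r Hw Hc) as E. destruct Hw as [Hx Hy].
  unfold next.
  destruct (Rle_dec _ _) as [H1|H1].
  { split; auto. unfold is_quarter, q1; simpl. repeat split; lra. }
  destruct (Rle_dec _ _) as [H2|H2].
  { split; auto. unfold is_quarter, q2; simpl. repeat split; lra. }
  destruct (Rle_dec _ _) as [H3|H3].
  { split; auto. unfold is_quarter, q3; simpl. repeat split; lra. }
  split. { unfold is_quarter, q4; simpl. repeat split; lra. }
  assert (T : (Cmod (RIr g r) <= Cmod (RIr g (q1 r)) + Cmod (RIr g (q2 r)) + Cmod (RIr g (q3 r)) + Cmod (RIr g (q4 r)))%R).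
  { rewrite E. eapply Rle_trans. apply Cmod_triangle. apply Rplus_le_compat_r.
    eapply Rle_trans. apply Cmod_triangle. apply Rplus_le_compat_r. apply Cmod_triangle. }
  lra.
Qed.

Fixpoint sq (g : C -> C) (r0 : rect) (n : nat) : rect := match n with O => r0 | S n => next g (sq g r0 n) end.

Lemma sq_inv (g : C -> C) (r0 : rect) (Hwf : wf r0) (Hc : contr g r0) n :
  (rx1 r0 <= rx1 (sq g r0 n))%R /\ (rx2 (sq g r0 n) <= rx2 r0)%R /\ (ry1 r0 <= ry1 (sq g r0 n))%R /\ (ry2 (sq g r0 n) <= ry2 r0)%R /\
  (rx2 (sq g r0 n) - rx1 (sq g r0 n) = (rx2 r0 - rx1 r0) * (/ 2) ^ n)%R /\
  (ry2 (sq g r0 n) - ry1 (sq g r0 n) = (ry2 r0 - ry1 r0) * (/ 2) ^ n)%R /\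
  (Cmod (RIr g r0) <= 4 ^ n * Cmod (RIr g (sq g r0 n)))%R.
Proof.
  destruct Hwf as [Hx Hy].
  induction n as [|n IH].
  - simpl. repeat split; try lra.
  - destruct IH as (A1 & A2 & A3 & A4 & A5 & A6 & A7).
    assert (W : wf (sq g r0 n)).
    { split. 
      - assert (0 <= (rx2 r0 - rx1 r0) * (/ 2) ^ n)%R. { apply Rmult_le_pos. lra. apply pow_le. lra. } lra.
      - assert (0 <= (ry2 r0 - ry1 r0) * (/ 2) ^ n)%R. { apply Rmult_le_pos. lra. apply pow_le. lra. } lra. }
    assert (C : contr g (sq g r0 n)).
    { unfold contr. apply (cont_rect_sub g (rx1 r0) (rx2 r0) (ry1 r0) (ry2 r0)); auto. }
    destruct (next_prop g (sq g r0 n) W C) as [(B1 & B2 & B3 & B4 & B5 & B6) B7].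
    assert (E5 : (rx2 (next g (sq g r0 n)) - rx1 (next g (sq g r0 n)) = (rx2 r0 - rx1 r0) * (/ 2) ^ S n)%R).
    { rewrite B5, A5. simpl. field. }
    assert (E6 : (ry2 (next g (sq g r0 n)) - ry1 (next g (sq g r0 n)) = (ry2 r0 - ry1 r0) * (/ 2) ^ S n)%R).
    { rewrite B6, A6. simpl. field. }
    assert (E7 : (Cmod (RIr g r0) <= 4 ^ S n * Cmod (RIr g (next g (sq g r0 n))))%R).
    { simpl. pose proof (pow_le 4 n ltac:(lra)). nra. }
    change (sq g r0 (S n)) with (next g (sq g r0 n)).
    repeat split; try lra.
Qed.

Lemma sq_mono (g : C -> C) (r0 : rect) (Hwf : wf r0) (Hc : contr g r0) m n : (m <= n)%nat ->
  (rx1 (sq g r0 m) <= rx1 (sq g r0 n))%R /\ (rx2 (sq g r0 n) <= rx2 (sq g r0 m))%R /\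
  (ry1 (sq g r0 m) <= ry1 (sq g r0 n))%R /\ (ry2 (sq g r0 n) <= ry2 (sq g r0 m))%R.
Proof.
  induction 1.
  - lra.
  - destruct (sq_inv g r0 Hwf Hc m0) as (A1 & A2 & A3 & A4 & A5 & A6 & A7).
    destruct Hwf as [Hx Hy].
    assert (W : wf (sq g r0 m0)).
    { split. 
      - assert (0 <= (rx2 r0 - rx1 r0) * (/ 2) ^ m0)%R. { apply Rmult_le_pos. lra. apply pow_le. lra. } lra.
      - assert (0 <= (ry2 r0 - ry1 r0) * (/ 2) ^ m0)%R. { apply Rmult_le_pos. lra. apply pow_le. lra. } lra. }
    assert (C : contr g (sq g r0 m0)).
    { unfold contr. apply (cont_rect_sub g (rx1 r0) (rx2 r0) (ry1 r0) (ry2 r0)); auto. }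
    destruct (next_prop g (sq g r0 m0) W C) as [(B1 & B2 & B3 & B4 & B5 & B6) B7].
    simpl. lra.
Qed.

Lemma sq_wf (g : C -> C) (r0 : rect) (Hwf : wf r0) (Hc : contr g r0) n : wf (sq g r0 n).
Proof.
  destruct (sq_inv g r0 Hwf Hc n) as (A1 & A2 & A3 & A4 & A5 & A6 & A7).
  destruct Hwf as [Hx Hy].
  split.
  - assert (0 <= (rx2 r0 - rx1 r0) * (/ 2) ^ n)%R. { apply Rmult_le_pos. lra. apply pow_le. lra. } lra.
  - assert (0 <= (ry2 r0 - ry1 r0) * (/ 2) ^ n)%R. { apply Rmult_le_pos. lra. apply pow_le. lra. } lra.
Qed.

Lemma sq_x_cross (g : C -> C) (r0 : rect) (Hwf : wf r0) (Hc : contr g r0) m n : (rx1 (sq g r0 m) <= rx2 (sq g r0 n))%R.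
Proof.
  destruct (Nat.le_ge_cases m n) as [H|H].
  - destruct (sq_mono g r0 Hwf Hc m n H). destruct (sq_wf g r0 Hwf Hc n). lra.
  - destruct (sq_mono g r0 Hwf Hc n m H) as (? & ? & ? & ?). destruct (sq_wf g r0 Hwf Hc m). lra.
Qed.
Lemma sq_y_cross (g : C -> C) (r0 : rect) (Hwf : wf r0) (Hc : contr g r0) m n : (ry1 (sq g r0 m) <= ry2 (sq g r0 n))%R.
Proof.
  destruct (Nat.le_ge_cases m n) as [H|H].
  - destruct (sq_mono g r0 Hwf Hc m n H) as (? & ? & ? & ?). destruct (sq_wf g r0 Hwf Hc n). lra.
  - destruct (sq_mono g r0 Hwf Hc n m H) as (? & ? & ? & ?). destruct (sq_wf g r0 Hwf Hc m). lra.
Qed.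

Lemma sq_point (g : C -> C) (r0 : rect) (Hwf : wf r0) (Hc : contr g r0) : exists px py, forall n,
  (rx1 (sq g r0 n) <= px <= rx2 (sq g r0 n))%R /\ (ry1 (sq g r0 n) <= py <= ry2 (sq g r0 n))%R.
Proof.
  destruct (completeness (fun x => exists n, x = rx1 (sq g r0 n))) as [px [Hub Hlub]].
  { exists (rx2 (sq g r0 0)). intros x [n ->]. apply (sq_x_cross g r0 Hwf Hc). }
  { exists (rx1 (sq g r0 0)). exists 0%nat. reflexivity. }
  destruct (completeness (fun x => exists n, x = ry1 (sq g r0 n))) as [py [Hub' Hlub']].
  { exists (ry2 (sq g r0 0)). intros x [n ->]. apply (sq_y_cross g r0 Hwf Hc). }
  { exists (ry1 (sq g r0 0)). exists 0%nat. reflexivity. }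
  exists px, py. intros n. split; split.
  - apply Hub. exists n. reflexivity.
  - apply Hlub. intros x [m ->]. apply (sq_x_cross g r0 Hwf Hc).
  - apply Hub'. exists n. reflexivity.
  - apply Hlub'. intros x [m ->]. apply (sq_y_cross g r0 Hwf Hc).
Qed.


Lemma small_le0 c K : (0 <= c)%R -> (0 <= K)%R -> (forall eps, 0 < eps -> c <= eps * K)%R -> c = 0%R.
Proof.
  intros Hc HK H. destruct (Req_dec c 0) as [E|E]; auto.
  assert (Hc' : (0 < c)%R) by lra.
  specialize (H (c / (2 * (K + 1)))%R). 
  assert (P : (0 < c / (2 * (K + 1)))%R) by (apply Rdiv_lt_0_compat; lra).
  specialize (H P).
  assert (c / (2 * (K + 1)) * K < c)%R.
  { unfold Rdiv. rewrite Rmult_assoc. 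
    assert (/ (2 * (K + 1)) * K < 1)%R.
    { apply (Rmult_lt_reg_l (2 * (K + 1))). lra. rewrite <- Rmult_assoc, Rinv_r by lra. lra. }
    nra. }
  lra.
Qed.

Lemma hol_affine c0 c1 z : hol (fun w => c0 + c1 * w) z.
Proof. apply hol_plus. apply hol_const. apply hol_mult. apply hol_const. apply hol_id. Qed.

Lemma Cmod_pt_diff x y px py : (Cmod ((x, y) - (px, py)) <= Rabs (x - px) + Rabs (y - py))%R.
Proof.
  replace ((x, y) - (px, py)) with ((x - px)%R, (y - py)%R).
  apply Cmod_pair_le. apply injective_projections; simpl; ring.
Qed.

Theorem goursat g x1 x2 y1 y2 : (x1 <= x2)%R -> (y1 <= y2)%R ->
  (forall x y, (x1 <= x <= x2)%R -> (y1 <= y <= y2)%R -> hol g (x, y)) ->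
  RI g x1 x2 y1 y2 = 0.
Proof.
  intros Hx Hy Hh.
  set (r0 := mkR x1 x2 y1 y2).
  assert (Hwf : wf r0) by (split; simpl; lra).
  assert (Hc : contr g r0) by (intros x y Hx' Hy'; apply hol_ccont; apply Hh; auto).
  destruct (sq_point g r0 Hwf Hc) as [px [py Hp]].
  assert (Hhp : hol g (px, py)).
  { destruct (Hp 0%nat) as [A B]. simpl in A, B. apply Hh; lra. }
  destruct Hhp as [l Hl].
  set (p := (px, py)) in *.
  apply Cmod_eq_0.
  apply (small_le0 _ (2 * ((x2 - x1) + (y2 - y1)) ^ 2)).
  { apply Cmod_ge_0. }
  { apply Rmult_le_pos; [lra|]. apply pow2_ge_0. }
  intros eps Heps.
  destruct (Hl eps Heps) as [d [Hd Hdd]].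
  set (S := ((x2 - x1) + (y2 - y1))%R).
  destruct (pow_lt_1_zero (/ 2) ltac:(rewrite Rabs_right; lra) (d / (S + 1))%R) as [N HN].
  { apply Rdiv_lt_0_compat; unfold S; lra. }
  specialize (HN N (Nat.le_refl N)).
  rewrite Rabs_right in HN. 2:{ apply Rle_ge, pow_le; lra. }
  set (q := ((/ 2) ^ N)%R) in *.
  assert (Hq0 : (0 <= q)%R) by (apply pow_le; lra).
  assert (HSq : (S * q < d)%R).
  { apply (Rmult_lt_compat_l (S + 1)) in HN; [|unfold S; lra].
    unfold Rdiv in HN. rewrite (Rmult_comm d), <- Rmult_assoc, Rinv_r in HN by (unfold S; lra).
    unfold S in *. nra. }
  destruct (sq_inv g r0 Hwf Hc N) as (A1 & A2 & A3 & A4 & A5 & A6 & A7).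
  simpl in A1, A2, A3, A4, A5, A6. fold q in A5, A6.
  set (Rn := sq g r0 N) in *.
  destruct (sq_wf g r0 Hwf Hc N) as [Wx Wy]. fold Rn in Wx, Wy.
  destruct (Hp N) as [Px Py]. fold Rn in Px, Py.
  set (A := fun w => (g p - l * p) + l * w).
  assert (HcA : contr A Rn).
  { intros x y _ _. apply hol_ccont. apply hol_affine. }
  assert (HcG : contr g Rn).
  { unfold contr. apply (cont_rect_sub g x1 x2 y1 y2); auto. }
  assert (E : RIr g Rn = RI (fun w => g w - A w) (rx1 Rn) (rx2 Rn) (ry1 Rn) (ry2 Rn)).
  { rewrite RI_minus; auto; try apply cont_rect_bd; auto. unfold A. rewrite RI_affine. unfold RIr. ring. }
  assert (B : (Cmod (RIr g Rn) <= 2 * (S * q) * (eps * (S * q)))%R).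
  { rewrite E.
    replace (S * q)%R with ((rx2 Rn - rx1 Rn) + (ry2 Rn - ry1 Rn))%R at 1 by (rewrite A5, A6; unfold S; ring).
    apply RI_bound; auto.
    - intros x y (Hx' & Hy' & _); apply hol_ccont; apply hol_minus; [apply Hh; lra | apply hol_affine].
    - intros x y (Hx' & Hy' & _).
      assert (D1 : (Cmod ((x, y) - p) <= S * q)%R).
      { eapply Rle_trans. apply Cmod_pt_diff. unfold S. 
        assert (Rabs (x - px) <= (x2 - x1) * q)%R by (apply Rabs_le; lra).
        assert (Rabs (y - py) <= (y2 - y1) * q)%R by (apply Rabs_le; lra).
        lra. }
      replace (g (x, y) - A (x, y)) with (g (x, y) - g p - l * ((x, y) - p)) by (unfold A; ring).
      eapply Rle_trans. apply Hdd. lra.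
      apply Rmult_le_compat_l; lra. }
  assert (F : (4 ^ N * (q * q) = 1)%R).
  { unfold q. rewrite <- Rpow_mult_distr, <- Rpow_mult_distr.
    replace (4 * (/ 2 * / 2))%R with 1%R by field. apply pow1. }
  fold S. 
  pose proof (pow_le 4 N ltac:(lra)).
  eapply Rle_trans. apply A7. fold Rn.
  eapply Rle_trans. apply Rmult_le_compat_l. lra. apply B.
  replace (4 ^ N * (2 * (S * q) * (eps * (S * q))))%R with (2 * S ^ 2 * eps * (4 ^ N * (q * q)))%R by ring.
  rewrite F. lra.
Qed.

Theorem goursat_exc g x1 x2 y1 y2 zx zy :
  (x1 < zx < x2)%R -> (y1 < zy < y2)%R -> cont_rect g x1 x2 y1 y2 ->
  (forall x y, (x1 <= x <= x2)%R -> (y1 <= y <= y2)%R -> (x, y) <> (zx, zy) -> hol g (x, y)) ->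
  RI g x1 x2 y1 y2 = 0.
Proof.
  intros Hx Hy Hc Hh.
  assert (Hcz : ccont g (zx, zy)) by (apply Hc; lra).
  destruct (Hcz 1%R ltac:(lra)) as [d0 [Hd0 Hb]].
  set (M := (Cmod (g (zx, zy)) + 1)%R).
  set (d1 := Rmin (Rmin (zx - x1) (x2 - zx)) (Rmin (Rmin (zy - y1) (y2 - zy)) (d0 / 4))).
  assert (Hd1 : (0 < d1)%R).
  { unfold d1. repeat apply Rmin_pos; lra. }
  assert (K : forall dl, (0 < dl < d1)%R -> (Cmod (RI g x1 x2 y1 y2) <= 8 * dl * M)%R).
  { intros dl [Hdl Hdl1].
    assert (H1 : (dl < zx - x1)%R) by (eapply Rlt_le_trans; [apply Hdl1|]; unfold d1; 
      eapply Rle_trans; [apply Rmin_l|]; apply Rmin_l).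
    assert (H2 : (dl < x2 - zx)%R) by (eapply Rlt_le_trans; [apply Hdl1|]; unfold d1; 
      eapply Rle_trans; [apply Rmin_l|]; apply Rmin_r).
    assert (H3 : (dl < zy - y1)%R) by (eapply Rlt_le_trans; [apply Hdl1|]; unfold d1; 
      eapply Rle_trans; [apply Rmin_r|]; eapply Rle_trans; [apply Rmin_l|]; apply Rmin_l).
    assert (H4 : (dl < y2 - zy)%R) by (eapply Rlt_le_trans; [apply Hdl1|]; unfold d1; 
      eapply Rle_trans; [apply Rmin_r|]; eapply Rle_trans; [apply Rmin_l|]; apply Rmin_r).
    assert (H5 : (dl < d0 / 4)%R) by (eapply Rlt_le_trans; [apply Hdl1|]; unfold d1; 
      eapply Rle_trans; [apply Rmin_r|]; apply Rmin_r).
    rewrite (split_x g x1 (zx - dl) x2) by (auto; lra).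
    rewrite (split_x g (zx - dl) (zx + dl) x2).
    2: lra. 2: lra. 2: apply (cont_rect_sub g x1 x2 y1 y2); auto; lra.
    rewrite (split_y g (zx - dl) (zx + dl) y1 (zy - dl) y2).
    2: lra. 2: lra. 2: apply (cont_rect_sub g x1 x2 y1 y2); auto; lra.
    rewrite (split_y g (zx - dl) (zx + dl) (zy - dl) (zy + dl) y2).
    2: lra. 2: lra. 2: apply (cont_rect_sub g x1 x2 y1 y2); auto; lra.
    rewrite (goursat g x1 (zx - dl) y1 y2).
    2: lra. 2: lra. 
    2:{ intros x y Ha Hb'. apply Hh; try lra. intro E. injection E. lra. }
    rewrite (goursat g (zx + dl) x2 y1 y2).
    2: lra. 2: lra. 
    2:{ intros x y Ha Hb'. apply Hh; try lra. intro E. injection E. lra. }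
    rewrite (goursat g (zx - dl) (zx + dl) y1 (zy - dl)).
    2: lra. 2: lra. 
    2:{ intros x y Ha Hb'. apply Hh; try lra. intro E. injection E. lra. }
    rewrite (goursat g (zx - dl) (zx + dl) (zy + dl) y2).
    2: lra. 2: lra. 
    2:{ intros x y Ha Hb'. apply Hh; try lra. intro E. injection E. lra. }
    replace (0 + (0 + (RI g (zx - dl) (zx + dl) (zy - dl) (zy + dl) + 0) + 0)) 
      with (RI g (zx - dl) (zx + dl) (zy - dl) (zy + dl)) by ring.
    replace (8 * dl * M)%R with (2 * ((zx + dl - (zx - dl)) + (zy + dl - (zy - dl))) * M)%R by ring.
    apply RI_bound; try lra.
    - apply cont_rect_bd. apply (cont_rect_sub g x1 x2 y1 y2); auto; lra.
    - intros x y (Ha & Hb' & _).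
      assert (D : (Cmod ((x, y) - (zx, zy)) < d0)%R).
      { eapply Rle_lt_trans. apply Cmod_pt_diff.
        assert (Rabs (x - zx) <= dl)%R by (apply Rabs_le; lra).
        assert (Rabs (y - zy) <= dl)%R by (apply Rabs_le; lra). lra. }
      specialize (Hb _ D).
      pose proof (Cmod_triangle (g (x, y) - g (zx, zy)) (g (zx, zy))).
      replace (g (x, y) - g (zx, zy) + g (zx, zy)) with (g (x, y)) in H by ring.
      unfold M. lra. }
  apply Cmod_eq_0.
  apply (small_le0 _ (8 * M)).
  { apply Cmod_ge_0. }
  { unfold M. pose proof (Cmod_ge_0 (g (zx, zy))). lra. }
  intros eps Heps.
  set (dl := Rmin eps (d1 / 2)).
  assert (Hdl : (0 < dl < d1)%R).
  { unfold dl. split. apply Rmin_pos; lra. eapply Rle_lt_trans. apply Rmin_r. lra. }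
  eapply Rle_trans. apply (K dl Hdl).
  assert (dl <= eps)%R by apply Rmin_l.
  assert (0 <= M)%R by (unfold M; pose proof (Cmod_ge_0 (g (zx, zy))); lra).
  nra.
Qed.

Lemma rcont_Im h t : rcont h t -> continuous (fun s => Im (h s)) t.
Proof.
  intros H. apply (filterlim_locally (U:=R_UniformSpace)). intros eps.
  destruct (H eps (cond_pos eps)) as [d [Hd Hs]].
  exists (mkposreal d Hd). intros s Hb. 
  change (Rabs (Im (h s) - Im (h t)) < eps)%R.
  eapply Rle_lt_trans; [|apply (Hs s Hb)].
  replace (Im (h s) - Im (h t))%R with (Im (h s - h t)) by (destruct (h s) as [? ?]; destruct (h t) as [? ?]; simpl; ring).
  apply Cmod_Im_le.
Qed.
Lemma rcont_Re h t : rcont h t -> continuous (fun s => Re (h s)) t.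
Proof.
  intros H. apply (filterlim_locally (U:=R_UniformSpace)). intros eps.
  destruct (H eps (cond_pos eps)) as [d [Hd Hs]].
  exists (mkposreal d Hd). intros s Hb. 
  change (Rabs (Re (h s) - Re (h t)) < eps)%R.
  eapply Rle_lt_trans; [|apply (Hs s Hb)].
  replace (Re (h s) - Re (h t))%R with (Re (h s - h t)) by (destruct (h s) as [? ?]; destruct (h t) as [? ?]; simpl; ring).
  apply Cmod_Re_le.
Qed.

Lemma RInt_neg f a b : (a < b)%R -> (forall x, (a < x < b)%R -> (f x < 0)%R) ->
  (forall x, (a <= x <= b)%R -> continuous f x) -> (RInt f a b < 0)%R.
Proof.
  intros Hab Hf Hc.
  replace 0%R with (RInt (fun _ => 0%R) a b).
  2:{ pose proof (is_RInt_constR a b 0) as H. rewrite Rmult_0_r in H. exact (is_RInt_unique _ _ _ _ H). }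
  apply RInt_lt; auto. intros; apply continuous_const.
Qed.

Lemma inv_diff a b zx zy : / ((a, b) - (zx, zy)) =
  (((a - zx) / ((a - zx) ^ 2 + (b - zy) ^ 2))%R, (- (b - zy) / ((a - zx) ^ 2 + (b - zy) ^ 2))%R).
Proof. reflexivity. Qed.

Lemma W_Im_pos zx zy x1 x2 y1 y2 : (x1 < zx < x2)%R -> (y1 < zy < y2)%R ->
  (0 < Im (RI (fun w : C => (/ (w - (zx, zy)))%C) x1 x2 y1 y2))%R.
Proof.
  intros Hx Hy.
  set (u := fun w => / (w - (zx, zy))).
  assert (Hcu : forall x y, (x, y) <> (zx, zy) -> ccont u (x, y)).
  { intros x y Hne. apply hol_ccont. apply hol_inv_lin. auto. }
  assert (ne1 : forall x y, x <> zx -> (x, y) <> (zx, zy)) by (intros x y H E; injection E; auto).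
  assert (ne2 : forall x y, y <> zy -> (x, y) <> (zx, zy)) by (intros x y H E; injection E; auto).
  unfold RI, hI, vI.
  assert (E : forall A B C D : C, Im (A + Ci * B - C - Ci * D) = (Im A + Re B - Im C - Re D)%R).
  { intros [] [] [] []. simpl. ring. }
  rewrite E. clear E.
  rewrite (Im_CI (fun t => u (t, y1)) x1 x2) by (apply hex; [lra|]; intros t Ht; apply Hcu, ne2; lra).
  rewrite (Im_CI (fun t => u (t, y2)) x1 x2) by (apply hex; [lra|]; intros t Ht; apply Hcu, ne2; lra).
  rewrite (Re_CI (fun t => u (x1, t)) y1 y2) by (apply vex; [lra|]; intros t Ht; apply Hcu, ne1; lra).
  rewrite (Re_CI (fun t => u (x2, t)) y1 y2) by (apply vex; [lra|]; intros t Ht; apply Hcu, ne1; lra).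
  assert (I1 : (0 < RInt (fun t => Im (u (t, y1))) x1 x2)%R).
  { apply RInt_gt_0; [lra| |].
    - intros t _. unfold u. rewrite inv_diff. unfold Im, Re. cbn [fst snd]. apply Rdiv_lt_0_compat. lra.
      assert (0 < (y1 - zy) ^ 2)%R by nra. pose proof (pow2_ge_0 (t - zx)). lra.
    - intros t Ht. apply rcont_Im. apply hrcont. apply Hcu. apply ne2; lra. }
  assert (I2 : (0 < RInt (fun t => Re (u (x2, t))) y1 y2)%R).
  { apply RInt_gt_0; [lra| |].
    - intros t _. unfold u. rewrite inv_diff. unfold Im, Re. cbn [fst snd]. apply Rdiv_lt_0_compat. lra.
      assert (0 < (x2 - zx) ^ 2)%R by nra. pose proof (pow2_ge_0 (t - zy)). lra.
    - intros t Ht. apply rcont_Re. apply vrcont. apply Hcu. apply ne1; lra. }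
  assert (I3 : (RInt (fun t => Im (u (t, y2))) x1 x2 < 0)%R).
  { apply RInt_neg; [lra| |].
    - intros t _. unfold u. rewrite inv_diff. unfold Im, Re. cbn [fst snd]. unfold Rdiv. 
      assert (0 < (y2 - zy) ^ 2)%R by nra. pose proof (pow2_ge_0 (t - zx)).
      assert (0 < / ((t - zx) ^ 2 + (y2 - zy) ^ 2))%R by (apply Rinv_0_lt_compat; lra). nra.
    - intros t Ht. apply rcont_Im. apply hrcont. apply Hcu. apply ne2; lra. }
  assert (I4 : (RInt (fun t => Re (u (x1, t))) y1 y2 < 0)%R).
  { apply RInt_neg; [lra| |].
    - intros t _. unfold u. rewrite inv_diff. unfold Im, Re. cbn [fst snd]. unfold Rdiv. 
      assert (0 < (x1 - zx) ^ 2)%R by nra. pose proof (pow2_ge_0 (t - zy)).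
      assert (0 < / ((x1 - zx) ^ 2 + (t - zy) ^ 2))%R by (apply Rinv_0_lt_compat; lra). nra.
    - intros t Ht. apply rcont_Re. apply vrcont. apply Hcu. apply ne1; lra. }
  lra.
Qed.

Definition Ceq_dec (x y : C) : {x = y} + {x <> y}.
Proof. decide equality; apply Req_EM_T. Defined.

Lemma hol_pow g w n : hol g w -> hol (fun v => g v ^ n) w.
Proof.
  intros H. induction n as [|n IH]; simpl.
  - apply hol_const.
  - apply hol_mult; auto.
Qed.

Lemma seg_bound (h : R -> C) a b : (a <= b)%R -> (forall t, (a <= t <= b)%R -> rcont h t) ->
  exists M, (0 <= M)%R /\ forall t, (a <= t <= b)%R -> (Cmod (h t) <= M)%R.
Proof.
  intros Hab Hc.
  destruct (continuity_ab_maj (fun t => Cmod (h t)) a b Hab) as [Mx [HM HMx]].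
  { intros c Hc'. intros eps Heps. destruct (Hc c Hc' eps Heps) as [d [Hd Hs]].
    exists d. split; auto. intros x [_ Hx]. simpl in Hx. unfold R_dist in Hx. simpl. unfold R_dist.
    specialize (Hs x Hx).
    pose proof (Cmod_rev_tri (h x) (h c)). pose proof (Cmod_rev_tri (h c) (h x)).
    rewrite Cmod_sub_sym in H0. apply Rabs_lt_between'. lra. }
  exists (Cmod (h Mx)). split. apply Cmod_ge_0. exact HM.
Qed.

Lemma bd_bound g x1 x2 y1 y2 : (x1 <= x2)%R -> (y1 <= y2)%R -> cont_bd g x1 x2 y1 y2 ->
  exists M, (0 <= M)%R /\ forall x y, on_bd x1 x2 y1 y2 x y -> (Cmod (g (x, y)) <= M)%R.
Proof.
  intros Hx Hy Hc.
  destruct (seg_bound (fun t => g (t, y1)) x1 x2 Hx) as [M1 [P1 H1]].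
  { intros t Ht. apply hrcont. apply Hc. unfold on_bd; repeat split; lra. }
  destruct (seg_bound (fun t => g (t, y2)) x1 x2 Hx) as [M2 [P2 H2]].
  { intros t Ht. apply hrcont. apply Hc. unfold on_bd; repeat split; lra. }
  destruct (seg_bound (fun t => g (x1, t)) y1 y2 Hy) as [M3 [P3 H3]].
  { intros t Ht. apply vrcont. apply Hc. unfold on_bd; repeat split; lra. }
  destruct (seg_bound (fun t => g (x2, t)) y1 y2 Hy) as [M4 [P4 H4]].
  { intros t Ht. apply vrcont. apply Hc. unfold on_bd; repeat split; lra. }
  exists (M1 + M2 + M3 + M4)%R. split. lra.
  intros x y (Ha & Hb & [E|[E|[E|E]]]); subst.
  - specialize (H3 y Hb). lra.
  - specialize (H4 y Hb). lra.
  - specialize (H1 x Ha). lra.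
  - specialize (H2 x Ha). lra.
Qed.

Lemma Cmod_bd_ge a1 a2 s x y : on_bd (a1 - s) (a1 + s) (a2 - s) (a2 + s) x y ->
  (s <= Cmod ((x, y) - (a1, a2)))%R.
Proof.
  intros (Ha & Hb & H).
  replace ((x, y) - (a1, a2)) with ((x - a1)%R, (y - a2)%R) by (apply injective_projections; simpl; ring).
  destruct H as [E|[E|[E|E]]]; subst.
  - eapply Rle_trans; [|apply (Cmod_Re_le ((a1 - s - a1)%R, (y - a2)%R))]. simpl.
    rewrite Rabs_left1; lra.
  - eapply Rle_trans; [|apply (Cmod_Re_le ((a1 + s - a1)%R, (y - a2)%R))]. simpl.
    rewrite Rabs_right; lra.
  - eapply Rle_trans; [|apply (Cmod_Im_le ((x - a1)%R, (a2 - s - a2)%R))]. simpl.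
    rewrite Rabs_left1; lra.
  - eapply Rle_trans; [|apply (Cmod_Im_le ((x - a1)%R, (a2 + s - a2)%R))]. simpl.
    rewrite Rabs_right; lra.
Qed.

Lemma C_neq_of_Cmod a b : (0 < Cmod (a - b))%R -> a <> b.
Proof. intros H E. subst. unfold Cminus in H. rewrite Cplus_opp_r, Cmod_0 in H. lra. Qed.

Lemma Csub_neq0 a b : a <> b -> a - b <> 0.
Proof. intros H E. apply H. replace a with (a - b + b) by ring. rewrite E. ring. Qed.

Lemma local_ident f a1 a2 s r0 :
  (0 < s)%R -> (0 < r0)%R ->
  (forall x y, (a1 - s <= x <= a1 + s)%R -> (a2 - s <= y <= a2 + s)%R -> hol f (x, y)) ->
  (forall w, (Cmod (w - (a1, a2)) < r0)%R -> f w = 0) ->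
  forall z, (Cmod (z - (a1, a2)) < s)%R -> f z = 0.
Proof.
  intros Hs Hr0 Hf Hz0 [zx zy] Hz.
  assert (Hzx : (a1 - s < zx < a1 + s)%R).
  { pose proof (Cmod_Re_le ((zx, zy) - (a1, a2))). simpl in H.
    replace (zx + - a1)%R with (zx - a1)%R in H by ring. apply Rabs_lt_between'. lra. }
  assert (Hzy : (a2 - s < zy < a2 + s)%R).
  { pose proof (Cmod_Im_le ((zx, zy) - (a1, a2))). simpl in H.
    replace (zy + - a2)%R with (zy - a2)%R in H by ring. apply Rabs_lt_between'. lra. }
  set (rho := Cmod ((zx, zy) - (a1, a2))) in *.
  assert (Hrho : (0 <= rho)%R) by apply Cmod_ge_0.
  assert (Bda : forall x y, on_bd (a1 - s) (a1 + s) (a2 - s) (a2 + s) x y -> (s <= Cmod ((x, y) - (a1, a2)))%R).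
  { apply Cmod_bd_ge. }
  assert (Bdz : forall x y, on_bd (a1 - s) (a1 + s) (a2 - s) (a2 + s) x y -> (s - rho <= Cmod ((x, y) - (zx, zy)))%R).
  { intros x y H. specialize (Bda x y H).
    pose proof (Cmod_rev_tri ((x, y) - (a1, a2)) ((zx, zy) - (a1, a2))).
    replace ((x, y) - (a1, a2) - ((zx, zy) - (a1, a2))) with ((x, y) - (zx, zy)) in H0 by ring.
    fold rho in H0. lra. }
  assert (Bin : forall x y, on_bd (a1 - s) (a1 + s) (a2 - s) (a2 + s) x y ->
     (a1 - s <= x <= a1 + s)%R /\ (a2 - s <= y <= a2 + s)%R).
  { intros x y (A & B & _). auto. }
  assert (NEa : forall x y, on_bd (a1 - s) (a1 + s) (a2 - s) (a2 + s) x y -> (x, y) <> (a1, a2)).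
  { intros x y H. apply C_neq_of_Cmod. specialize (Bda x y H). lra. }
  assert (NEz : forall x y, on_bd (a1 - s) (a1 + s) (a2 - s) (a2 + s) x y -> (x, y) <> (zx, zy)).
  { intros x y H. apply C_neq_of_Cmod. specialize (Bdz x y H). lra. }
  set (c := (zx, zy) - (a1, a2)).
  set (ua := fun w => / (w - (a1, a2))).
  set (uz := fun w => / (w - (zx, zy))).
  assert (Hua : forall w, w <> (a1, a2) -> hol ua w) by (intros; apply hol_inv_lin; auto).
  assert (Huz : forall w, w <> (zx, zy) -> hol uz w) by (intros; apply hol_inv_lin; auto).
  set (En := fun n => RI (fun w => f w * (c * ua w) ^ n * uz w) (a1 - s) (a1 + s) (a2 - s) (a2 + s)).
  assert (HolE : forall n x y, on_bd (a1 - s) (a1 + s) (a2 - s) (a2 + s) x y ->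
     hol (fun w => f w * (c * ua w) ^ n * uz w) (x, y)).
  { intros n x y H. destruct (Bin x y H).
    apply hol_mult; [apply hol_mult|].
    - apply Hf; auto.
    - apply hol_pow. apply hol_mult. apply hol_const. apply Hua. auto.
    - apply Huz. auto. }
  assert (C1 : forall n, En (S n) = En n).
  { intros n.
    set (hn := fun w => if Ceq_dec w (a1, a2) then RtoC 0 else f w * (c * ua w) ^ n * ua w).
    assert (G : RI hn (a1 - s) (a1 + s) (a2 - s) (a2 + s) = 0).
    { apply goursat; try lra. intros x y Hx Hy.
      destruct (Rlt_le_dec (Cmod ((x, y) - (a1, a2))) r0) as [Hl|Hl].
      - apply (hol_ext_loc (fun _ => RtoC 0) hn (x, y) (r0 - Cmod ((x, y) - (a1, a2)))); [lra| |apply hol_const].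
        intros w Hw. unfold hn. destruct (Ceq_dec w (a1, a2)); auto.
        rewrite Hz0. ring.
        pose proof (Cmod_triangle (w - (x, y)) ((x, y) - (a1, a2))).
        replace (w - (x, y) + ((x, y) - (a1, a2))) with (w - (a1, a2)) in H by ring. lra.
      - assert (Hpos : (0 < Cmod ((x, y) - (a1, a2)))%R) by lra.
        apply (hol_ext_loc (fun w => f w * (c * ua w) ^ n * ua w) hn (x, y) (Cmod ((x, y) - (a1, a2)))); auto.
        + intros w Hw. unfold hn. destruct (Ceq_dec w (a1, a2)) as [E|E]; auto.
          subst w. rewrite Cmod_sub_sym in Hw. lra.
        + assert (NE : (x, y) <> (a1, a2)) by (apply C_neq_of_Cmod; auto).
          apply hol_mult; [apply hol_mult|].
          * apply Hf; auto.
          * apply hol_pow. apply hol_mult. apply hol_const. apply Hua. auto.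
          * apply Hua. auto. }
    assert (D : RI (fun w => f w * (c * ua w) ^ n * uz w - f w * (c * ua w) ^ (S n) * uz w)
                  (a1 - s) (a1 + s) (a2 - s) (a2 + s) = En n - En (S n)).
    { unfold En. apply RI_minus; try lra.
      - intros x y H. apply hol_ccont. apply HolE. auto.
      - intros x y H. apply hol_ccont. apply HolE. auto. }
    assert (D2 : RI (fun w => f w * (c * ua w) ^ n * uz w - f w * (c * ua w) ^ (S n) * uz w)
                  (a1 - s) (a1 + s) (a2 - s) (a2 + s) = RI hn (a1 - s) (a1 + s) (a2 - s) (a2 + s)).
    { apply RI_ext_bd; try lra. intros x y H. unfold hn.
      destruct (Ceq_dec (x, y) (a1, a2)) as [E|E]. { exfalso. apply (NEa x y H). auto. }
      unfold uz, ua, c. simpl Cpow.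
      assert (N1 : (x, y) - (a1, a2) <> 0) by (apply Csub_neq0; auto).
      assert (N2 : (x, y) - (zx, zy) <> 0) by (apply Csub_neq0; apply NEz; auto).
      field. split; auto. }
    rewrite D2, G in D. 
    apply (f_equal (fun v => v + En (S n))) in D. 
    replace (En n - En (S n) + En (S n)) with (En n) in D by ring.
    rewrite <- D. ring. }
  set (F := RI (fun w => f w * uz w) (a1 - s) (a1 + s) (a2 - s) (a2 + s)).
  assert (C2 : forall n, En n = F).
  { induction n as [|n IH].
    - unfold En, F. apply RI_ext_bd; try lra. intros x y _. simpl Cpow. ring.
    - rewrite C1. auto. }
  set (W := RI uz (a1 - s) (a1 + s) (a2 - s) (a2 + s)).
  assert (C3 : F = f (zx, zy) * W).
  { assert (Hfz : hol f (zx, zy)) by (apply Hf; lra).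
    destruct Hfz as [l Hl].
    set (gz := fun w => if Ceq_dec w (zx, zy) then l else (f w - f (zx, zy)) * uz w).
    assert (Hgz : forall w, w <> (zx, zy) -> (a1 - s <= Re w <= a1 + s)%R -> (a2 - s <= Im w <= a2 + s)%R -> hol gz w).
    { intros w NE Hx Hy.
      assert (Hpos : (0 < Cmod (w - (zx, zy)))%R).
      { apply Cmod_gt_0. apply Csub_neq0. auto. }
      apply (hol_ext_loc (fun v => (f v - f (zx, zy)) * uz v) gz w (Cmod (w - (zx, zy)))); auto.
      + intros v Hv. unfold gz. destruct (Ceq_dec v (zx, zy)) as [E|E]; auto.
        subst v. rewrite Cmod_sub_sym in Hv. lra.
      + apply hol_mult. apply hol_minus. destruct w; apply Hf; auto. apply hol_const. apply Huz. auto. }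
    assert (G : RI gz (a1 - s) (a1 + s) (a2 - s) (a2 + s) = 0).
    { apply (goursat_exc gz _ _ _ _ zx zy); try lra.
      - intros x y Hx Hy. destruct (Ceq_dec (x, y) (zx, zy)) as [E|E].
        + rewrite E. intros eps Heps. destruct (Hl (eps / 2)%R ltac:(lra)) as [d [Hd Hdd]].
          exists d. split; auto. intros w Hw. unfold gz.
          destruct (Ceq_dec w (zx, zy)) as [E1|E1]; destruct (Ceq_dec (zx, zy) (zx, zy)) as [E2|E2]; try congruence.
          * unfold Cminus. rewrite Cplus_opp_r, Cmod_0. lra.
          * assert (N : w - (zx, zy) <> 0) by (apply Csub_neq0; auto).
            replace ((f w - f (zx, zy)) * uz w - l) with ((f w - f (zx, zy) - l * (w - (zx, zy))) * / (w - (zx, zy))).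
            2:{ unfold uz. field. auto. }
            rewrite Cmod_mult, Cmod_inv by auto.
            specialize (Hdd w Hw).
            assert (P : (0 < Cmod (w - (zx, zy)))%R) by (apply Cmod_gt_0; auto).
            apply (Rmult_le_compat_r (/ Cmod (w - (zx, zy)))) in Hdd.
            2:{ left. apply Rinv_0_lt_compat. auto. }
            rewrite Rmult_assoc, Rinv_r in Hdd by lra. lra.
        + apply hol_ccont. apply Hgz; simpl; auto.
      - intros x y Hx Hy NE. apply Hgz; simpl; auto. }
    assert (E1 : RI gz (a1 - s) (a1 + s) (a2 - s) (a2 + s) =
                 RI (fun w => f w * uz w - f (zx, zy) * uz w) (a1 - s) (a1 + s) (a2 - s) (a2 + s)).
    { apply RI_ext_bd; try lra. intros x y H. unfold gz.
      destruct (Ceq_dec (x, y) (zx, zy)) as [E|E]. { exfalso. apply (NEz x y H). auto. }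
      ring. }
    rewrite RI_minus in E1; try lra.
    2:{ intros x y H. apply hol_ccont. destruct (Bin x y H). apply hol_mult. apply Hf; auto. apply Huz. auto. }
    2:{ intros x y H. apply hol_ccont. apply hol_mult. apply hol_const. apply Huz. auto. }
    rewrite RI_scal in E1; try lra.
    2:{ intros x y H. apply hol_ccont. apply Huz. auto. }
    rewrite G in E1. fold F W in E1.
    apply (f_equal (fun v => v + f (zx, zy) * W)) in E1.
    replace (F - f (zx, zy) * W + f (zx, zy) * W) with F in E1 by ring.
    rewrite <- E1. ring. }
  destruct (bd_bound f (a1 - s) (a1 + s) (a2 - s) (a2 + s)) as [Mf [HMf0 HMf]]; try lra.
  { intros x y H. apply hol_ccont. destruct (Bin x y H). apply Hf; auto. }
  assert (Hsr : (0 < s - rho)%R) by lra.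
  assert (C4 : forall n, (Cmod F <= (8 * s * Mf / (s - rho)) * (rho / s) ^ n)%R).
  { intros n. rewrite <- (C2 n). unfold En.
    replace ((8 * s * Mf / (s - rho)) * (rho / s) ^ n)%R with
      (2 * ((a1 + s - (a1 - s)) + (a2 + s - (a2 - s))) * (Mf * (rho / s) ^ n * / (s - rho)))%R
      by (field; lra).
    apply RI_bound; try lra.
    - intros x y H. apply hol_ccont. apply HolE. auto.
    - intros x y H.
      specialize (Bda x y H). specialize (Bdz x y H).
      pose proof (NEa x y H) as NA. pose proof (NEz x y H) as NZ.
      assert (N1 : (x, y) - (a1, a2) <> 0) by (apply Csub_neq0; auto).
      assert (N2 : (x, y) - (zx, zy) <> 0) by (apply Csub_neq0; auto).
      rewrite !Cmod_mult, Cmod_pow, Cmod_mult. unfold ua, uz. rewrite !Cmod_inv by auto.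
      fold c. replace (Cmod c) with rho by reflexivity.
      apply Rmult_le_compat.
      + apply Rmult_le_pos. apply Cmod_ge_0. apply pow_le. apply Rmult_le_pos. lra. left; apply Rinv_0_lt_compat. lra.
      + left; apply Rinv_0_lt_compat. lra.
      + apply Rmult_le_compat. apply Cmod_ge_0. apply pow_le. apply Rmult_le_pos. lra. left; apply Rinv_0_lt_compat. lra.
        * apply HMf; auto.
        * apply pow_incr. split. apply Rmult_le_pos. lra. left; apply Rinv_0_lt_compat. lra.
          unfold Rdiv. apply Rmult_le_compat_l. lra. apply Rinv_le_contravar; lra.
      + apply Rinv_le_contravar; lra. }
  assert (C5 : F = 0).
  { apply Cmod_eq_0.
    apply (small_le0 _ (8 * s * Mf / (s - rho))).
    { apply Cmod_ge_0. }
    { unfold Rdiv. apply Rmult_le_pos. nra. left. apply Rinv_0_lt_compat. lra. }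
    intros eps Heps.
    assert (Hq : (Rabs (rho / s) < 1)%R).
    { rewrite Rabs_right. 2:{ apply Rle_ge. unfold Rdiv. apply Rmult_le_pos. lra. left; apply Rinv_0_lt_compat; lra. }
      apply (Rmult_lt_reg_r s). lra. unfold Rdiv. rewrite Rmult_assoc, Rinv_l by lra. lra. }
    destruct (pow_lt_1_zero (rho / s) Hq eps Heps) as [N HN].
    specialize (HN N (Nat.le_refl N)).
    rewrite Rabs_right in HN. 2:{ apply Rle_ge. apply pow_le. unfold Rdiv. apply Rmult_le_pos. lra. left; apply Rinv_0_lt_compat; lra. }
    eapply Rle_trans. apply (C4 N).
    assert (0 <= 8 * s * Mf / (s - rho))%R.
    { unfold Rdiv. apply Rmult_le_pos. nra. left. apply Rinv_0_lt_compat. lra. }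
    rewrite (Rmult_comm eps). apply Rmult_le_compat_l; lra. }
  assert (HW : (0 < Im W)%R).
  { apply W_Im_pos; lra. }
  assert (HW0 : W <> 0).
  { intro E. rewrite E in HW. simpl in HW. lra. }
  rewrite C5 in C3.
  assert (E : f (zx, zy) = f (zx, zy) * W * / W) by (field; auto).
  rewrite E, <- C3. ring.
Qed.

Lemma local_ident' f a s r0 :
  (0 < s)%R -> (0 < r0)%R ->
  (forall x y, (Re a - s <= x <= Re a + s)%R -> (Im a - s <= y <= Im a + s)%R -> hol f (x, y)) ->
  (forall w, (Cmod (w - a) < r0)%R -> f w = 0) ->
  forall z, (Cmod (z - a) < s)%R -> f z = 0.
Proof. destruct a as [a1 a2]. apply local_ident. Qed.

Lemma ident_disc f :
  (forall z, (Cmod z < 1)%R -> hol f z) ->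
  forall a r, (Cmod a < 1)%R -> (0 < r)%R -> (forall w, (Cmod (w - a) < r)%R -> f w = 0) ->
  forall z, (Cmod z < 1)%R -> f z = 0.
Proof.
  intros Hf a r Ha Hr H0 w Hw.
  set (mu := Rmax (Cmod a) (Cmod w)).
  assert (Hmu : (mu < 1)%R) by (unfold mu; apply Rmax_lub_lt; auto).
  assert (Hmu0 : (0 <= mu)%R) by (unfold mu; eapply Rle_trans; [apply Cmod_ge_0|apply Rmax_l]).
  set (s := ((1 - mu) / 3)%R).
  assert (Hs : (0 < s)%R) by (unfold s; lra).
  set (D := Cmod (w - a)).
  assert (HD : (0 <= D)%R) by apply Cmod_ge_0.
  destruct (archimed_cor1 (s / (D + 1))%R) as [K [HK HK0]].
  { apply Rdiv_lt_0_compat; lra. }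
  assert (HKpos : (0 < INR K)%R) by (apply lt_0_INR; auto).
  assert (Hstep : (D / INR K < s)%R).
  { apply (Rmult_lt_compat_l (D + 1)) in HK; [|lra].
    unfold Rdiv in *. rewrite (Rmult_comm s), <- Rmult_assoc, Rinv_r in HK by lra.
    assert (D * / INR K <= (D + 1) * / INR K)%R.
    { apply Rmult_le_compat_r. left; apply Rinv_0_lt_compat; auto. lra. }
    lra. }
  set (pt := fun k : nat => a + RtoC (INR k / INR K) * (w - a)).
  assert (Hpt : forall k, (k <= K)%nat -> (Cmod (pt k) <= mu)%R).
  { intros k Hk. set (t := (INR k / INR K)%R).
    assert (Ht : (0 <= t <= 1)%R).
    { unfold t. split. apply Rmult_le_pos. apply pos_INR. left; apply Rinv_0_lt_compat; auto.
      apply (Rmult_le_reg_r (INR K)); auto. unfold Rdiv. rewrite Rmult_assoc, Rinv_l by lra.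
      rewrite Rmult_1_r, Rmult_1_l. apply le_INR. auto. }
    unfold pt. fold t.
    replace (a + RtoC t * (w - a)) with (RtoC (1 - t) * a + RtoC t * w) by (unfold RtoC; apply injective_projections; simpl; ring).
    eapply Rle_trans. apply Cmod_triangle. rewrite !Cmod_mult, !Cmod_R.
    rewrite !Rabs_right by lra.
    assert (Cmod a <= mu)%R by apply Rmax_l. assert (Cmod w <= mu)%R by apply Rmax_r.
    nra. }
  assert (Hdist : forall k, Cmod (pt (S k) - pt k) = (D / INR K)%R).
  { intros k. unfold pt. rewrite S_INR.
    replace (a + RtoC ((INR k + 1) / INR K) * (w - a) - (a + RtoC (INR k / INR K) * (w - a)))
      with (RtoC (/ INR K) * (w - a)) by (unfold RtoC; apply injective_projections; simpl; field; lra).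
    rewrite Cmod_mult, Cmod_R, Rabs_right. fold D. unfold Rdiv. ring.
    left; apply Rinv_0_lt_compat; auto. }
  assert (Hsq : forall k, (k <= K)%nat -> forall x y, (Re (pt k) - s <= x <= Re (pt k) + s)%R ->
            (Im (pt k) - s <= y <= Im (pt k) + s)%R -> hol f (x, y)).
  { intros k Hk x y Hx Hy. apply Hf.
    pose proof (Hpt k Hk).
    pose proof (Cmod_triangle (pt k) ((x, y) - pt k)).
    assert (E : pt k + ((x, y) - pt k) = (x, y)) by ring. rewrite E in H1.
    assert (Cmod ((x, y) - pt k) <= 2 * s)%R.
    { eapply Rle_trans. apply Cmod_le_sum. destruct (pt k) as [p1 p2]. simpl in Hx, Hy |- *.
      assert (Rabs (x + - p1) <= s)%R by (apply Rabs_le; lra).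
      assert (Rabs (y + - p2) <= s)%R by (apply Rabs_le; lra). lra. }
    unfold s in *. lra. }
  assert (Main : forall k, (k <= K)%nat -> exists r', (0 < r')%R /\ forall v, (Cmod (v - pt k) < r')%R -> f v = 0).
  { induction k as [|k IH]; intros Hk.
    - exists r. split; auto. intros v Hv. apply H0. unfold pt in Hv.
      replace (a + RtoC (INR 0 / INR K) * (w - a)) with a in Hv; auto.
      simpl. unfold RtoC. apply injective_projections; simpl; field; lra.
    - destruct (IH ltac:(lia)) as [r' [Hr' Hv]].
      pose proof (local_ident' f (pt k) s r' Hs Hr' (Hsq k ltac:(lia)) Hv) as L.
      exists (s - D / INR K)%R. split. lra.
      intros v Hv'. apply L.
      pose proof (Cmod_triangle (v - pt (S k)) (pt (S k) - pt k)).
      replace (v - pt (S k) + (pt (S k) - pt k)) with (v - pt k) in H by ring.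
      rewrite Hdist in H. lra. }
  destruct (Main K (Nat.le_refl K)) as [r' [Hr' Hv]].
  apply Hv.
  replace (w - pt K) with (RtoC 0).
  rewrite Cmod_0. auto.
  unfold pt. unfold RtoC. apply injective_projections; simpl; field; lra.
Qed.

Lemma hol_comp_lin g c z0 : hol g (c * z0) -> hol (fun z => g (c * z)) z0.
Proof.
  intros [l Hl]. exists (l * c). intros eps Heps.
  pose proof (Cmod_ge_0 c) as Hc.
  destruct (Hl (eps / (Cmod c + 1))%R) as [d [Hd Hdd]].
  { apply Rdiv_lt_0_compat; lra. }
  exists (d / (Cmod c + 1))%R. split. { apply Rdiv_lt_0_compat; lra. }
  intros w Hw.
  assert (E : c * w - c * z0 = c * (w - z0)) by ring.
  pose proof (Cmod_ge_0 (w - z0)) as Hn.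
  assert (Hcw : (Cmod (c * w - c * z0) < d)%R).
  { rewrite E, Cmod_mult.
    apply (Rmult_lt_compat_l (Cmod c + 1)) in Hw; [|lra].
    unfold Rdiv in Hw. rewrite (Rmult_comm d), <- Rmult_assoc, Rinv_r in Hw by lra. nra. }
  specialize (Hdd (c * w) Hcw).
  replace (g (c * w) - g (c * z0) - l * c * (w - z0)) with (g (c * w) - g (c * z0) - l * (c * w - c * z0)) by ring.
  eapply Rle_trans. apply Hdd.
  rewrite E, Cmod_mult.
  replace (eps / (Cmod c + 1) * (Cmod c * Cmod (w - z0)))%R with (eps * Cmod (w - z0) * (Cmod c / (Cmod c + 1)))%R by (field; lra).
  assert (Cmod c / (Cmod c + 1) <= 1)%R.
  { apply (Rmult_le_reg_r (Cmod c + 1)). lra. unfold Rdiv. rewrite Rmult_assoc, Rinv_l by lra. lra. }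
  assert (0 <= eps * Cmod (w - z0))%R by nra.
  nra.
Qed.

Lemma Cmod_beta_1 (beta : C) (N : nat) : (1 <= N)%nat -> beta ^ N = 1 -> Cmod beta = 1%R.
Proof.
  intros HN Hb.
  assert (E : (Cmod beta ^ N = 1)%R) by (rewrite <- Cmod_pow, Hb; apply Cmod_1).
  pose proof (Cmod_ge_0 beta).
  destruct (Rtotal_order (Cmod beta) 1) as [H1|[H1|H1]]; auto.
  - assert (Cmod beta ^ N < 1)%R by (apply pow_lt_1_compat; [lra|lia]). lra.
  - assert (1 < Cmod beta ^ N)%R by (apply Rlt_pow_R1; [lra|lia]). lra.
Qed.

Fixpoint prodm (m : C -> C) (beta : C) (n : nat) (z : C) : C :=
  match n with O => 1 | S n => prodm m beta n z * m (beta ^ n * z) end.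

Theorem proposition3p3 (beta : C) (N : nat) (m : C -> C) :
  (2 <= N)%nat ->
  beta ^ N = 1 ->
  (forall k : nat, (1 <= k <= N - 1)%nat -> beta ^ k <> 1) ->
  holomorphic_on_disc m ->
  ~ zero_on_disc m ->
  (exists z0 : C, in_disc z0 /\ m z0 = 0) ->
  forall lambda : C, ~ in_point_spectrum m beta lambda.
Proof.
  intros HN Hb _ Hm Hmnz [z0 [Hz0 Hmz0]] lambda [f [Hfh [Hfnz Heq]]].
  apply Hfnz.
  unfold in_disc, holomorphic_on_disc, zero_on_disc, Top in *.
  assert (Hmh : forall z, (Cmod z < 1)%R -> hol m z) by (intros; apply ex_derive_hol; auto).
  assert (Hfh' : forall z, (Cmod z < 1)%R -> hol f z) by (intros; apply ex_derive_hol; auto).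
  assert (Hb1 : Cmod beta = 1%R) by (apply (Cmod_beta_1 beta N); [lia|auto]).
  assert (Hbn : forall n z, Cmod (beta ^ n * z) = Cmod z).
  { intros n z. rewrite Cmod_mult, Cmod_pow, Hb1, pow1. ring. }
  assert (Hb0 : beta <> 0).
  { intro E. rewrite E, Cmod_0 in Hb1. lra. }
  destruct (Ceq_dec lambda 0) as [Hl0|Hl0].
  -
    subst lambda.
    assert (Hex : exists w, (Cmod w < 1)%R /\ m w <> 0).
    { apply NNPP. intro Hn. apply Hmnz. intros z Hz.
      apply NNPP. intro Hmz. apply Hn. exists z. auto. }
    destruct Hex as [w [Hw Hmw]].
    assert (Hmw0 : (0 < Cmod (m w))%R) by (apply Cmod_gt_0; auto).
    destruct (hol_ccont m w (Hmh w Hw) (Cmod (m w)) Hmw0) as [d [Hd Hdd]].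
    set (d' := Rmin d (1 - Cmod w)).
    assert (Hd' : (0 < d')%R) by (unfold d'; apply Rmin_pos; lra).
    apply (ident_disc f Hfh' (beta * w) d').
    { replace (beta * w) with (beta ^ 1 * w) by (simpl; ring). rewrite Hbn. auto. }
    { auto. }
    intros u Hu.
    set (v := u / beta).
    assert (Hv : Cmod (v - w) = Cmod (u - beta * w)).
    { replace (v - w) with ((u - beta * w) * / beta) by (unfold v; field; auto).
      rewrite Cmod_mult, Cmod_inv, Hb1 by auto. rewrite Rinv_1. ring. }
    assert (Hv1 : (Cmod v < 1)%R).
    { pose proof (Cmod_triangle (v - w) w). replace (v - w + w) with v in H by ring.
      assert (d' <= 1 - Cmod w)%R by apply Rmin_r. lra. }
    assert (Hmv : m v <> 0).
    { intro E. assert (Cmod (v - w) < d)%R by (assert (d' <= d)%R by apply Rmin_l; lra).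
      specialize (Hdd v H). rewrite E in Hdd.
      replace (0 - m w) with (- m w) in Hdd by ring. rewrite Cmod_opp in Hdd. lra. }
    specialize (Heq v Hv1). cbv beta in Heq.
    replace (beta * v) with u in Heq by (unfold v; field; auto).
    assert (E : m v * f u = 0).
    { replace (m v * f u) with (- (RtoC 0 * f v - m v * f u)) by ring. rewrite Heq. ring. }
    assert (E2 : f u = / m v * (m v * f u)) by (field; auto).
    rewrite E2, E. ring.
  -
    assert (Hit : forall n z, (Cmod z < 1)%R -> lambda ^ n * f z = prodm m beta n z * f (beta ^ n * z)).
    { induction n as [|n IH]; intros z Hz.
      - change (lambda ^ 0) with (RtoC 1). change (prodm m beta 0 z) with (RtoC 1).
        change (beta ^ 0) with (RtoC 1). rewrite !Cmult_1_l. reflexivity.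
      - change (lambda ^ S n) with (lambda * lambda ^ n).
        change (prodm m beta (S n) z) with (prodm m beta n z * m (beta ^ n * z)).
        change (beta ^ S n) with (beta * beta ^ n).
        replace (lambda * lambda ^ n * f z) with (lambda * (lambda ^ n * f z)) by ring.
        rewrite IH by auto.
        assert (Hz' : (Cmod (beta ^ n * z) < 1)%R) by (rewrite Hbn; auto).
        specialize (Heq (beta ^ n * z) Hz'). cbv beta in Heq.
        assert (E : lambda * f (beta ^ n * z) = m (beta ^ n * z) * f (beta * (beta ^ n * z))).
        { replace (lambda * f (beta ^ n * z)) with
            ((lambda * f (beta ^ n * z) - m (beta ^ n * z) * f (beta * (beta ^ n * z))) + m (beta ^ n * z) * f (beta * (beta ^ n * z))) by ring.
          rewrite Heq. ring. }
        replace (beta * beta ^ n * z) with (beta * (beta ^ n * z)) by ring.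
        transitivity (prodm m beta n z * (lambda * f (beta ^ n * z))). ring.
        rewrite E. ring. }
    assert (HP0 : forall n, prodm m beta (S n) z0 = 0).
    { induction n as [|n IH]. simpl. rewrite Cmult_1_l, Cmult_1_l. auto. 
      simpl. simpl in IH. rewrite IH. ring. }
    assert (HPh : forall n, hol (prodm m beta n) z0).
    { induction n as [|n IH]; simpl.
      - apply hol_const.
      - apply hol_mult; auto. apply hol_comp_lin. apply Hmh. rewrite Hbn. auto. }
    assert (HlN : (0 < Cmod (lambda ^ N))%R).
    { rewrite Cmod_pow. apply pow_lt. apply Cmod_gt_0. auto. }
    destruct (hol_ccont _ _ (HPh N) _ HlN) as [d [Hd Hdd]].
    set (d' := Rmin d (1 - Cmod z0)).
    assert (Hd' : (0 < d')%R) by (unfold d'; apply Rmin_pos; lra).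
    apply (ident_disc f Hfh' z0 d' Hz0 Hd').
    intros u Hu.
    assert (Hu1 : (Cmod u < 1)%R).
    { pose proof (Cmod_triangle (u - z0) z0). replace (u - z0 + z0) with u in H by ring.
      assert (d' <= 1 - Cmod z0)%R by apply Rmin_r. lra. }
    assert (Hud : (Cmod (u - z0) < d)%R) by (assert (d' <= d)%R by apply Rmin_l; lra).
    specialize (Hdd u Hud).
    destruct N as [|N']. lia.
    rewrite HP0 in Hdd. replace (prodm m beta (S N') u - 0) with (prodm m beta (S N') u) in Hdd by ring.
    specialize (Hit (S N') u Hu1). rewrite Hb, Cmult_1_l in Hit.
    assert (NZ : lambda ^ S N' - prodm m beta (S N') u <> 0).
    { intro E. assert (H : lambda ^ S N' = prodm m beta (S N') u).
      { replace (lambda ^ S N') with ((lambda ^ S N' - prodm m beta (S N') u) + prodm m beta (S N') u) by ring.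
        rewrite E. ring. }
      rewrite H in Hdd. lra. }
    assert (E : (lambda ^ S N' - prodm m beta (S N') u) * f u = 0).
    { replace ((lambda ^ S N' - prodm m beta (S N') u) * f u) with (lambda ^ S N' * f u - prodm m beta (S N') u * f u) by ring.
      rewrite Hit. ring. }
    assert (E2 : f u = / (lambda ^ S N' - prodm m beta (S N') u) * ((lambda ^ S N' - prodm m beta (S N') u) * f u)) by (field; auto).
    rewrite E2, E. ring.
Qed.
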